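(* Let $0<\alpha<1$, let $\Gamma$ be a Jordan curve of class $C^{1+\alpha}$, and let $\eta\in C^{1+\alpha}(\Gamma)$ be such that $\eta(\Gamma)=\mathbb{T}$ and $\eta^{-1}:\mathbb{T}\to\Gamma$ exists and is differentiable. Fix any pseudoanalytic extension of $\eta$ to $\mathbb{C}$, also denoted $\eta$. Then there is a neighborhood $U$ of $\Gamma$ such that $\eta:U\to\eta(U)$ is a $C^1$ diffeomorphism, $\eta(U)$ is a neighborhood of $\mathbb{T}$, and $\eta$ is bi-Lipschitz in $U$: there are constants $c,C>0$ with $$c|z-w|\le|\eta(z)-\eta(w)|\le C|z-w|,\qquad z,w\in U.$$
   Context: $\mathbb{T}$ is the unit circle. A Jordan curve $\Gamma$ is of class $C^{1+\alpha}$ if $\Gamma=\psi(\mathbb{T})$ for a bijection $\psi:\mathbb{T}\to\Gamma$ with $\psi\in C^1(\mathbb{T})$, $\psi'$ nowhere vanishing and $\psi'$ Hölder of order $\alpha$. A function $f:\Gamma\to\mathbb{C}$ belongs to $C^{1+\alpha}(\Gamma)$ if $f\circ\psi\in C^1(\mathbb{T})$ and $(f\circ\psi)'$ is Hölder of order $\alpha$. A pseudoanalytic extension of $f\in C^{1+\alpha}(\Gamma)$ is a function $F\in C^1(\mathbb{C})$ with $F|_\Gamma=f$ and $\left|\frac{\partial F}{\partial\bar z}(z)\right|\le C_f\operatorname{dist}(z,\Gamma)^\alpha$ for all $z\in\mathbb{C}$, for some constant $C_f$, where $\frac{\partial}{\partial\bar z}=\frac12\left(\frac{\partial}{\partial x}+i\frac{\partial}{\partial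 y}\right)$. Such extensions always exist. *)

(* Defs.v *)
From Stdlib Require Import Reals.
From Coquelicot Require Import Coquelicot.
Open Scope R_scope.

(* x^a for x >= 0 with the convention 0^a = 0 (a > 0). *)
Definition hpow (x a : R) : R := if Rle_dec x 0 then 0 else Rpower x a.

Definition onT (z : C) : Prop := Cmod z = 1.
Definition circ (t : R) : C := (cos t, sin t).

(* a function h on T, seen as a 2pi-periodic function of the angle *)
Definition lift (h : C -> C) (t : R) : C := h (circ t).

Definition cderiv (G : R -> C) (t : R) : C :=
  (Derive (fun s => fst (G s)) t, Derive (fun s => snd (G s)) t).

Definition differentiable_curve_at (G : R -> C) (t : R) : Prop :=
  ex_derive (fun s => fst (G s)) t /\ ex_derive (fun s => snd (G s)) t.

Definition C1_T (h : C -> C) : Prop :=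
  forall t, differentiable_curve_at (lift h) t /\ continuous (cderiv (lift h)) t.

Definition holder (a : R) (G : R -> C) : Prop :=
  exists K : R, forall s t, Cmod (Cminus (G s) (G t)) <= K * hpow (Rabs (s - t)) a.

Definition C1a_T (a : R) (h : C -> C) : Prop :=
  C1_T h /\ holder a (cderiv (lift h)).

Definition jordan_C1a (a : R) (Gamma : C -> Prop) (psi : C -> C) : Prop :=
  (forall z, onT z -> Gamma (psi z)) /\
  (forall w, Gamma w -> exists z, onT z /\ psi z = w) /\
  (forall z1 z2, onT z1 -> onT z2 -> psi z1 = psi z2 -> z1 = z2) /\
  C1a_T a psi /\
  (forall t, cderiv (lift psi) t <> 0%C).

Definition C1a_Gamma (a : R) (psi : C -> C) (f : C -> C) : Prop :=
  C1a_T a (fun z => f (psi z)).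

Definition dx (u : C -> R) (z : C) : R := Derive (fun t => u (t, snd z)) (fst z).
Definition dy (u : C -> R) (z : C) : R := Derive (fun t => u (fst z, t)) (snd z).

Definition C1_on_R (V : C -> Prop) (u : C -> R) : Prop :=
  forall z, V z ->
    ex_derive (fun t => u (t, snd z)) (fst z) /\
    ex_derive (fun t => u (fst z, t)) (snd z) /\
    continuous (dx u) z /\ continuous (dy u) z.

Definition C1_on (V : C -> Prop) (F : C -> C) : Prop :=
  C1_on_R V (fun z => fst (F z)) /\ C1_on_R V (fun z => snd (F z)).

(* dF/dzbar = 1/2 (F_x + i F_y) *)
Definition dbar (F : C -> C) (z : C) : C :=
  let u := fun w => fst (F w) in
  let v := fun w => snd (F w) in
  ((dx u z - dy v z) / 2, (dx v z + dy u z) / 2).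

Definition dist_set (Gamma : C -> Prop) (z : C) : R :=
  real (Glb_Rbar (fun r => exists w, Gamma w /\ r = Cmod (Cminus z w))).

Definition pseudoanalytic_ext (a : R) (Gamma : C -> Prop) (f F : C -> C) : Prop :=
  C1_on (fun _ => True) F /\
  (forall z, Gamma z -> F z = f z) /\
  exists Cf : R, forall z, Cmod (dbar F z) <= Cf * hpow (dist_set Gamma z) a.

(* Main.v *)
Require Import Defs.
From Stdlib Require Import Reals Lra Lia Psatz ClassicalEpsilon Classical.
From Coquelicot Require Import Coquelicot.
Open Scope R_scope.

Definition bx (p : C) (r : R) (z : C) : Prop :=
  Rabs (fst z - fst p) < r /\ Rabs (snd z - snd p) < r.

Lemma ball_bx (p z : C) (r : R) : ball p r z <-> bx p r z.
Proof. destruct p, z; unfold bx, ball; simpl; unfold prod_ball, AbsRing_ball, abs, minus, plus, opp; simpl. tauto. Qed.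

Lemma Cminus_fst (z w : C) : fst (Cminus z w) = fst z - fst w.
Proof. destruct z, w; simpl; ring. Qed.
Lemma Cminus_snd (z w : C) : snd (Cminus z w) = snd z - snd w.
Proof. destruct z, w; simpl; ring. Qed.

Lemma Cmod_fst (z : C) : Rabs (fst z) <= Cmod z.
Proof. destruct z as [x y]. unfold Cmod; simpl. rewrite <- sqrt_Rsqr_abs. apply sqrt_le_1_alt. unfold Rsqr. nra. Qed.
Lemma Cmod_snd (z : C) : Rabs (snd z) <= Cmod z.
Proof. destruct z as [x y]. unfold Cmod; simpl. rewrite <- sqrt_Rsqr_abs. apply sqrt_le_1_alt. unfold Rsqr. nra. Qed.
Lemma Cmod_le_sum (z : C) : Cmod z <= Rabs (fst z) + Rabs (snd z).
Proof.
  destruct z as [x y]. unfold Cmod; simpl.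
  rewrite <- (sqrt_Rsqr (Rabs x + Rabs y)) by (generalize (Rabs_pos x) (Rabs_pos y); lra).
  apply sqrt_le_1_alt. unfold Rsqr.
  generalize (Rabs_pos x) (Rabs_pos y); intros.
  assert (x*x = Rabs x * Rabs x) by (rewrite <- Rabs_mult; rewrite Rabs_right; nra).
  assert (y*y = Rabs y * Rabs y) by (rewrite <- Rabs_mult; rewrite Rabs_right; nra).
  nra.
Qed.
Lemma Cmod_pair (x y : R) : Cmod (x, y) <= Rabs x + Rabs y.
Proof. apply (Cmod_le_sum (x,y)). Qed.

Lemma exd_cont (f : R -> R) x : ex_derive f x -> continuity_pt f x.
Proof. intros H. apply continuity_pt_filterlim. apply (ex_derive_continuous (K:=R_AbsRing) (V:=R_NormedModule) f x H). Qed.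

Lemma mvt_est (f df : R -> R) (a b al eps : R) :
  (forall t, Rmin a b <= t <= Rmax a b -> is_derive f t (df t)) ->
  (forall t, Rmin a b <= t <= Rmax a b -> Rabs (df t - al) <= eps) ->
  Rabs (f b - f a - al * (b - a)) <= eps * Rabs (b - a).
Proof.
  intros Hd Hb.
  destruct (MVT_gen (fun t => f t - al * t) a b (fun t => df t - al)) as [c [Hc Heq]].
  - intros x Hx. apply (is_derive_minus f (fun t => al * t) x (df x) al). apply Hd; lra.
    auto_derive; auto; ring.
  - intros x Hx. apply (continuity_pt_minus f (fun t => al * t)).
    apply exd_cont. eexists; apply Hd; lra.
    apply exd_cont. auto_derive; auto.
  - simpl in Heq. replace (f b - f a - al * (b - a)) with (f b - al * b - (f a - al * a)) by ring.
    rewrite Heq, Rabs_mult. apply Rmult_le_compat_r. apply Rabs_pos. apply Hb; lra.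
Qed.

Definition exparts (u : C -> R) : Prop := forall z : C,
  ex_derive (fun t => u (t, snd z)) (fst z) /\ ex_derive (fun t => u (fst z, t)) (snd z).

Lemma Rmin_Rmax_between a b x : Rmin a b <= x <= Rmax a b -> forall c r, Rabs (a - c) < r -> Rabs (b - c) < r -> Rabs (x - c) < r.
Proof.
  intros Hx c r Ha Hb. unfold Rmin, Rmax in Hx.
  destruct (Rle_dec a b); apply Rabs_def2 in Ha; apply Rabs_def2 in Hb; apply Rabs_def1; lra.
Qed.

Lemma est2 (u : C -> R) (p : C) (r al be eps : R) :
  exparts u ->
  (forall z, bx p r z -> Rabs (dx u z - al) <= eps /\ Rabs (dy u z - be) <= eps) ->
  forall z w, bx p r z -> bx p r w ->
  Rabs (u w - u z - (al * (fst w - fst z) + be * (snd w - snd z)))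
    <= eps * (Rabs (fst w - fst z) + Rabs (snd w - snd z)).
Proof.
  intros Hex Hb [z1 z2] [w1 w2] [Hz1 Hz2] [Hw1 Hw2]; simpl in *.
  assert (E1 : Rabs (u (w1, z2) - u (z1, z2) - al * (w1 - z1)) <= eps * Rabs (w1 - z1)).
  { apply (mvt_est (fun t => u (t, z2)) (fun t => dx u (t, z2))).
    - intros t Ht. unfold dx; simpl. apply Derive_correct. apply (proj1 (Hex (t, z2))).
    - intros t Ht. apply (Hb (t, z2)). split; simpl; auto.
      apply (Rmin_Rmax_between z1 w1 t Ht); auto. }
  assert (E2 : Rabs (u (w1, w2) - u (w1, z2) - be * (w2 - z2)) <= eps * Rabs (w2 - z2)).
  { apply (mvt_est (fun t => u (w1, t)) (fun t => dy u (w1, t))).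
    - intros t Ht. unfold dy; simpl. apply Derive_correct. apply (proj2 (Hex (w1, t))).
    - intros t Ht. apply (Hb (w1, t)). split; simpl; auto.
      apply (Rmin_Rmax_between z2 w2 t Ht); auto. }
  replace (u (w1, w2) - u (z1, z2) - (al * (w1 - z1) + be * (w2 - z2))) with
    ((u (w1, z2) - u (z1, z2) - al * (w1 - z1)) + (u (w1, w2) - u (w1, z2) - be * (w2 - z2))) by ring.
  eapply Rle_trans. apply Rabs_triang. lra.
Qed.
Lemma Cmod_sq (z : C) : Cmod z * Cmod z = fst z * fst z + snd z * snd z.
Proof. destruct z as [x y]; unfold Cmod; simpl. rewrite sqrt_sqrt; nra. Qed.

Lemma onT_circ t : onT (circ t).
Proof. unfold onT, Cmod, circ; simpl.
  assert (E : cos t * (cos t * 1) + sin t * (sin t * 1) = 1).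
  { generalize (sin2_cos2 t); unfold Rsqr; intros; rewrite !Rmult_1_r; lra. }
  rewrite E. apply sqrt_1. Qed.

Lemma polar (w : C) : onT w -> exists t, -PI <= t <= PI /\ circ t = w.
Proof.
  intros Hw. destruct w as [x y]. unfold onT in Hw.
  assert (H1 : x * x + y * y = 1) by (generalize (Cmod_sq (x, y)); simpl; rewrite Hw; nra).
  assert (Hx : -1 <= x <= 1) by (split; nra).
  assert (Hs : sqrt (1 - x²) = Rabs y).
  { rewrite <- sqrt_Rsqr_abs. f_equal. unfold Rsqr; lra. }
  generalize (acos_bound x); intros Hb.
  destruct (Rle_dec 0 y) as [Hy|Hy].
  - exists (acos x). split. lra. unfold circ. rewrite cos_acos, sin_acos by auto.
    rewrite Hs, Rabs_right by lra. reflexivity.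
  - exists (- acos x). split. lra. unfold circ. rewrite cos_neg, sin_neg, cos_acos, sin_acos by auto.
    rewrite Hs, Rabs_left by lra. f_equal. ring.
Qed.

Lemma circ_2PI t : circ (t + 2 * PI) = circ t.
Proof. unfold circ. rewrite cos_plus, sin_plus, cos_2PI, sin_2PI. f_equal; ring. Qed.
Lemma circ_m2PI t : circ (t - 2 * PI) = circ t.
Proof. rewrite <- (circ_2PI (t - 2*PI)). f_equal. ring. Qed.

Lemma circ_dist2 t s : Cmod (Cminus (circ t) (circ s)) * Cmod (Cminus (circ t) (circ s)) = 2 - 2 * cos (t - s).
Proof.
  rewrite Cmod_sq, Cminus_fst, Cminus_snd. unfold circ; simpl. rewrite cos_minus.
  generalize (sin2_cos2 t) (sin2_cos2 s); unfold Rsqr; intros; nra.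
Qed.

Lemma circ_sep (del : R) : 0 < del <= PI -> exists k, 0 < k /\
  forall t s, Rabs (t - s) <= PI -> Cmod (Cminus (circ t) (circ s)) < k -> Rabs (t - s) < del.
Proof.
  intros Hd. exists (sqrt (2 - 2 * cos del)).
  assert (Hc : cos del < 1) by (rewrite <- cos_0; apply cos_decreasing_1; lra).
  split. apply sqrt_lt_R0. lra.
  intros t s Hts Hk. destruct (Rlt_dec (Rabs (t - s)) del) as [H|H]; auto. exfalso.
  assert (Hcos : cos (t - s) <= cos del).
  { replace (cos (t - s)) with (cos (Rabs (t - s))).
    destruct (Req_dec (Rabs (t - s)) del) as [E|E]. rewrite E; lra.
    left. apply cos_decreasing_1; try lra.
    unfold Rabs; destruct (Rcase_abs (t - s)). apply cos_neg. auto. }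
  generalize (circ_dist2 t s); intros E.
  assert (sqrt (2 - 2 * cos del) <= Cmod (Cminus (circ t) (circ s))).
  { rewrite <- (sqrt_Rsqr (Cmod _)) by apply Cmod_ge_0. apply sqrt_le_1_alt. unfold Rsqr. lra. }
  lra.
Qed.

Lemma cont_eps (f : C -> R) (p : C) : continuous f p ->
  forall eps, 0 < eps -> exists r, 0 < r /\ forall z, bx p r z -> Rabs (f z - f p) < eps.
Proof.
  intros Hc eps He. destruct (proj1 (filterlim_locally f (f p)) Hc (mkposreal eps He)) as [r Hr].
  exists r. split. apply cond_pos. intros z Hz. apply ball_bx in Hz. specialize (Hr z Hz).
  exact Hr.
Qed.

Lemma deriv_lip (f : R -> R) x l : derivable_pt_lim f x l ->
  exists del, 0 < del /\ forall h, Rabs h < del -> Rabs (f (x + h) - f x) <= (Rabs l + 1) * Rabs h.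
Proof.
  intros H. destruct (H 1 Rlt_0_1) as [del Hd]. exists del. split. apply cond_pos.
  intros h Hh. destruct (Req_dec h 0) as [E|E].
  - subst. replace (x + 0) with x by ring. rewrite Rminus_diag, Rabs_R0. lra.
  - specialize (Hd h E Hh).
    replace (f (x + h) - f x) with (((f (x + h) - f x) / h - l) * h + l * h) by (field; auto).
    eapply Rle_trans. apply Rabs_triang. rewrite !Rabs_mult.
    generalize (Rabs_pos h) (Rabs_pos l); nra.
Qed.

Lemma exd_eps (f : R -> R) x : ex_derive f x ->
  forall eps, 0 < eps -> exists del, 0 < del /\ forall y, Rabs (y - x) < del -> Rabs (f y - f x) < eps.
Proof.
  intros [l Hl] eps He. apply is_derive_Reals in Hl. destruct (deriv_lip f x l Hl) as [d [Hd H]].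
  exists (Rmin d (eps / (Rabs l + 1))). split.
  { apply Rmin_pos. auto. apply Rdiv_lt_0_compat. auto. generalize (Rabs_pos l); lra. }
  intros y Hy. replace y with (x + (y - x)) by ring. eapply Rle_lt_trans. apply H.
  eapply Rlt_le_trans. apply Hy. apply Rmin_l.
  assert (Rabs (y - x) < eps / (Rabs l + 1)) by (eapply Rlt_le_trans; [apply Hy| apply Rmin_r]).
  generalize (Rabs_pos l); intros.
  replace (x + (y - x) - x) with (y - x) by ring.
  apply Rmult_lt_reg_r with (/ (Rabs l + 1)). apply Rinv_0_lt_compat; lra.
  replace ((Rabs l + 1) * Rabs (y - x) * / (Rabs l + 1)) with (Rabs (y - x)) by (field; lra).
  exact H0.
Qed.

Lemma chain_zero (u : C -> R) (G1 G2 f : R -> R) (t0 : R) (p : C) :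
  G1 t0 = fst p -> G2 t0 = snd p -> ex_derive G1 t0 -> ex_derive G2 t0 ->
  (forall t, f t = u (G1 t, G2 t)) ->
  (forall eps, 0 < eps -> exists r, 0 < r /\ forall z, bx p r z ->
      Rabs (u z - u p) <= eps * (Rabs (fst z - fst p) + Rabs (snd z - snd p))) ->
  derivable_pt_lim f t0 0.
Proof.
  intros E1 E2 [l1 H1] [l2 H2] Hf Hu eps He.
  apply is_derive_Reals in H1. apply is_derive_Reals in H2.
  destruct (deriv_lip _ _ _ H1) as [d1 [Hd1 L1]].
  destruct (deriv_lip _ _ _ H2) as [d2 [Hd2 L2]].
  set (K := Rabs l1 + Rabs l2 + 2).
  assert (HK : 0 < K) by (unfold K; generalize (Rabs_pos l1) (Rabs_pos l2); lra).
  destruct (Hu (eps / (2 * K))) as [r [Hr Hur]]. apply Rdiv_lt_0_compat; lra.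
  assert (Hpos : 0 < Rmin (Rmin d1 d2) (r / K)).
  { repeat apply Rmin_pos; auto. apply Rdiv_lt_0_compat; lra. }
  exists (mkposreal _ Hpos). intros h Hh0 Hh. simpl in Hh.
  assert (Hh1 : Rabs h < d1) by (eapply Rlt_le_trans; [apply Hh| eapply Rle_trans; [apply Rmin_l| apply Rmin_l]]).
  assert (Hh2 : Rabs h < d2) by (eapply Rlt_le_trans; [apply Hh| eapply Rle_trans; [apply Rmin_l| apply Rmin_r]]).
  assert (Hh3 : Rabs h < r / K) by (eapply Rlt_le_trans; [apply Hh| apply Rmin_r]).
  specialize (L1 h Hh1). specialize (L2 h Hh2).
  assert (Hhp : 0 < Rabs h) by (apply Rabs_pos_lt; auto).
  assert (HhK : K * Rabs h < r).
  { apply Rmult_lt_reg_r with (/ K). apply Rinv_0_lt_compat; auto.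
    replace (K * Rabs h * / K) with (Rabs h) by (field; lra). exact Hh3. }
  assert (Hb : bx p r (G1 (t0 + h), G2 (t0 + h))).
  { split; simpl; rewrite <- ?E1, <- ?E2; generalize (Rabs_pos l1) (Rabs_pos l2); unfold K in HhK; nra. }
  specialize (Hur _ Hb). simpl in Hur. rewrite <- E1, <- E2 in Hur.
  rewrite !Hf. replace (u (G1 t0, G2 t0)) with (u p) by (rewrite E1, E2; destruct p; auto).
  rewrite Rminus_0_r.
  rewrite Rabs_div by auto.
  apply Rmult_lt_reg_r with (Rabs h). auto.
  replace (Rabs (u (G1 (t0 + h), G2 (t0 + h)) - u p) / Rabs h * Rabs h)
    with (Rabs (u (G1 (t0 + h), G2 (t0 + h)) - u p)) by (field; lra).
  eapply Rle_lt_trans. apply Hur.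
  assert (Rabs (G1 (t0 + h) - G1 t0) + Rabs (G2 (t0 + h) - G2 t0) <= K * Rabs h).
  { unfold K. lra. }
  apply Rle_lt_trans with (eps / (2 * K) * (K * Rabs h)).
  apply Rmult_le_compat_l. left; apply Rdiv_lt_0_compat; lra. auto.
  replace (eps / (2 * K) * (K * Rabs h)) with (eps * Rabs h / 2) by (field; lra).
  assert (0 < eps * Rabs h) by (apply Rmult_lt_0_compat; auto).
  lra.
Qed.

Fixpoint iterC (Phi : C -> C) (z0 : C) (n : nat) : C :=
  match n with O => z0 | S n => Phi (iterC Phi z0 n) end.

Lemma Cmod_tri3 (x y z : C) : Cmod (Cminus x z) <= Cmod (Cminus x y) + Cmod (Cminus y z).
Proof.
  replace (Cminus x z) with (Cplus (Cminus x y) (Cminus y z)) by (unfold Cminus; ring).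
  apply Cmod_triangle.
Qed.

Lemma Cmod_sym (x y : C) : Cmod (Cminus x y) = Cmod (Cminus y x).
Proof.
  replace (Cminus x y) with (Copp (Cminus y x)) by (unfold Cminus; ring).
  apply Cmod_opp.
Qed.

Lemma Cmod_self (x : C) : Cmod (Cminus x x) = 0.
Proof. destruct x as [a b]; unfold Cmod; simpl. rewrite <- sqrt_0. f_equal. ring. Qed.

Lemma half_pow_le N j : (1/2) ^ (N + j) <= (1/2) ^ N.
Proof.
  induction j. rewrite Nat.add_0_r; lra.
  replace (N + S j)%nat with (S (N + j)) by lia. simpl.
  assert (0 <= (1/2) ^ (N + j)) by (apply pow_le; lra). lra.
Qed.

Lemma small_pow (y : R) : 0 < y -> exists N, forall n, (n >= N)%nat -> (1/2) ^ n < y.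
Proof.
  intros Hy. destruct (pow_lt_1_zero (1/2)) with y as [N HN]; auto.
  rewrite Rabs_right; lra.
  exists N. intros n Hn. specialize (HN n Hn). rewrite Rabs_right in HN; auto.
  apply Rle_ge, pow_le; lra.
Qed.

Lemma le_eps (x : R) : (forall eps, 0 < eps -> x <= eps) -> x <= 0.
Proof. intros H. destruct (Rle_dec x 0); auto. specialize (H (x / 2)). lra. Qed.

Lemma contraction (F : C -> C) (a z0 w : C) (R0 : R) :
  a <> 0%C ->
  (forall z z', Cmod (Cminus z z0) <= R0 -> Cmod (Cminus z' z0) <= R0 ->
     Cmod (Cminus (Cminus (F z) (F z')) (Cmult a (Cminus z z'))) <= Cmod a / 2 * Cmod (Cminus z z')) ->
  2 * (Cmod (Cminus w (F z0)) / Cmod a) <= R0 ->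
  exists z, Cmod (Cminus z z0) <= R0 /\ F z = w.
Proof.
  intros Ha HF HR.
  assert (HA : 0 < Cmod a) by (apply Cmod_gt_0; auto).
  set (d0 := Cmod (Cminus w (F z0)) / Cmod a).
  assert (Hd0 : 0 <= d0) by (unfold d0; apply Rdiv_le_0_compat; auto; apply Cmod_ge_0).
  assert (HR' : 2 * d0 <= R0) by exact HR. clear HR.
  set (Phi := fun z => Cplus z (Cdiv (Cminus w (F z)) a)).
  set (zs := iterC Phi z0).
  assert (Hstep : forall n, Cminus (zs (S n)) (zs n) = Cdiv (Cminus w (F (zs n))) a).
  { intros n. simpl. unfold zs; simpl; unfold Phi, Cminus, Cdiv. field; auto. }
  assert (Hcon : forall z z', Cmod (Cminus z z0) <= R0 -> Cmod (Cminus z' z0) <= R0 ->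
            Cmod (Cminus (Phi z) (Phi z')) <= / 2 * Cmod (Cminus z z')).
  { intros z z' Hz Hz'. specialize (HF z z' Hz Hz').
    replace (Cminus (Phi z) (Phi z')) with
      (Cdiv (Copp (Cminus (Cminus (F z) (F z')) (Cmult a (Cminus z z')))) a)
      by (unfold Phi, Cminus, Cdiv; field; auto).
    rewrite Cmod_div by auto. rewrite Cmod_opp.
    apply Rmult_le_reg_r with (Cmod a); auto.
    replace (Cmod (Cminus (Cminus (F z) (F z')) (Cmult a (Cminus z z'))) / Cmod a * Cmod a)
      with (Cmod (Cminus (Cminus (F z) (F z')) (Cmult a (Cminus z z')))) by (field; lra).
    lra. }
  assert (Hinv : forall n, Cmod (Cminus (zs (S n)) (zs n)) <= (1/2) ^ n * d0 /\
                           Cmod (Cminus (zs n) z0) <= 2 * d0 * (1 - (1/2) ^ n)).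
  { induction n.
    - split. simpl pow. rewrite Hstep. simpl zs. rewrite Cmod_div by auto. unfold d0. rewrite Rmult_1_l. right; reflexivity.
      simpl. rewrite Cmod_self. lra.
    - destruct IHn as [I1 I2].
      assert (I3 : Cmod (Cminus (zs (S n)) z0) <= 2 * d0 * (1 - (1/2) ^ S n)).
      { eapply Rle_trans. apply (Cmod_tri3 _ (zs n)). simpl pow. lra. }
      split; auto.
      assert (0 <= (1/2)^n) by (apply pow_le; lra).
      assert (0 <= (1/2)^ S n) by (apply pow_le; lra).
      assert (Hc := Hcon (zs (S n)) (zs n)).
      change (zs (S (S n))) with (Phi (zs (S n))). change (zs (S n)) with (Phi (zs n)) at 2.
      assert (0 <= d0 * (1/2) ^ S n) by (apply Rmult_le_pos; auto).
      assert (0 <= d0 * (1/2) ^ n) by (apply Rmult_le_pos; auto).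
      assert (Hd2 : 2 * d0 * (1 - (1/2) ^ S n) <= R0)  by lra.
      assert (Hd3 : 2 * d0 * (1 - (1/2) ^ n) <= R0) by lra.
      eapply Rle_trans. apply Hc. lra. lra. change (Phi (zs n)) with (zs (S n)).
      simpl pow. lra. }
  assert (Hcauchy0 : forall k j, Cmod (Cminus (zs (k + j)%nat) (zs k)) <= 2 * d0 * ((1/2) ^ k - (1/2) ^ (k + j))).
  { intros k j. induction j.
    - rewrite Nat.add_0_r. rewrite Cmod_self. lra.
    - replace (k + S j)%nat with (S (k + j)) by lia.
      eapply Rle_trans. apply (Cmod_tri3 _ (zs (k + j)%nat)).
      destruct (Hinv (k + j)%nat) as [I1 _]. simpl pow. lra. }
  assert (Hcauchy : forall k j, Cmod (Cminus (zs (k + j)%nat) (zs k)) <= 2 * d0 * (1/2) ^ k).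
  { intros k j. eapply Rle_trans. apply Hcauchy0. assert (0 <= (1/2) ^ (k + j)) by (apply pow_le; lra).
    assert (0 <= d0 * (1/2) ^ (k + j)) by (apply Rmult_le_pos; auto). lra. }
  assert (Hcc : forall n m N, (n >= N)%nat -> (m >= N)%nat -> Cmod (Cminus (zs n) (zs m)) <= 2 * d0 * (1/2) ^ N).
  { intros n m N Hn Hm.
    assert (HH : forall n m, (n >= m)%nat -> (m >= N)%nat -> Cmod (Cminus (zs n) (zs m)) <= 2 * d0 * (1/2) ^ N).
    { intros n0 m0 H1 H2. replace n0 with (m0 + (n0 - m0))%nat by lia. eapply Rle_trans. apply Hcauchy.
      replace m0 with (N + (m0 - N))%nat by lia. assert (Hp := half_pow_le N (m0 - N)).
      apply Rmult_le_compat_l; lra. }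
    destruct (Compare_dec.le_ge_dec n m). rewrite Cmod_sym. apply HH; lia. apply HH; lia. }
  assert (Hcomp : forall (pr : C -> R), (forall x, Rabs (pr x) <= Cmod x) ->
            (forall x y, pr (Cminus x y) = pr x - pr y) ->
            Cauchy_crit (fun n => pr (zs n))).
  { intros pr Hpr Hlin eps He.
    destruct (small_pow (eps / (2 * d0 + 1))) as [N HN]. apply Rdiv_lt_0_compat; lra.
    exists N. intros n m Hn Hm. unfold R_dist. rewrite <- Hlin.
    eapply Rle_lt_trans. apply Hpr. eapply Rle_lt_trans. apply (Hcc n m N); auto.
    specialize (HN N (Nat.le_refl N)).
    assert (0 <= (1/2)^N) by (apply pow_le; lra).
    apply Rle_lt_trans with ((2 * d0 + 1) * (1/2)^N). nra.
    apply Rmult_lt_reg_r with (/ (2 * d0 + 1)). apply Rinv_0_lt_compat; lra.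
    replace ((2 * d0 + 1) * (1 / 2) ^ N * / (2 * d0 + 1)) with ((1/2)^N) by (field; lra).
    exact HN. }
  destruct (Rcomplete.R_complete _ (Hcomp fst Cmod_fst Cminus_fst)) as [l1 Hl1].
  destruct (Rcomplete.R_complete _ (Hcomp snd Cmod_snd Cminus_snd)) as [l2 Hl2].
  set (l := (l1, l2) : C).
  assert (Hclose : forall eps, 0 < eps -> exists N, forall n, (n >= N)%nat -> Cmod (Cminus l (zs n)) < eps).
  { intros eps He. destruct (Hl1 (eps/2)) as [N1 H1]. lra. destruct (Hl2 (eps/2)) as [N2 H2]. lra.
    exists (Nat.max N1 N2). intros n Hn. eapply Rle_lt_trans. apply Cmod_le_sum.
    rewrite Cminus_fst, Cminus_snd. simpl fst; simpl snd.
    specialize (H1 n ltac:(lia)). specialize (H2 n ltac:(lia)). unfold R_dist in H1, H2.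
    rewrite Rabs_minus_sym in H1. rewrite Rabs_minus_sym in H2. lra. }
  assert (Hl0 : Cmod (Cminus l z0) <= 2 * d0).
  { assert (Cmod (Cminus l z0) - 2 * d0 <= 0); [|lra]. apply le_eps. intros eps He.
    destruct (Hclose eps He) as [N HN]. specialize (HN N (Nat.le_refl N)).
    generalize (Cmod_tri3 l (zs N) z0). destruct (Hinv N) as [_ I2].
    assert (0 <= d0 * (1/2) ^ N) by (apply Rmult_le_pos; auto; apply pow_le; lra). lra. }
  exists l. split. lra.
  assert (HFl : Cmod (Cminus (F l) w) <= 0).
  { apply le_eps. intros eps He.
    set (e1 := eps / (3 * Cmod a + 1)).
    assert (He1 : 0 < e1) by (unfold e1; apply Rdiv_lt_0_compat; lra).
    destruct (Hclose e1 He1) as [N1 HN1].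
    destruct (small_pow (e1 / (d0 + 1))) as [N2 HN2]. apply Rdiv_lt_0_compat; lra.
    set (n := Nat.max N1 N2).
    specialize (HN1 n ltac:(unfold n; lia)). specialize (HN2 n ltac:(unfold n; lia)).
    destruct (Hinv n) as [I1 I2].
    assert (Hzn : Cmod (Cminus (zs n) z0) <= R0).
    { assert (0 <= d0 * (1/2) ^ n) by (apply Rmult_le_pos; auto; apply pow_le; lra). lra. }
    assert (E1 : Cmod (Cminus (F l) (F (zs n))) <= 3 * Cmod a / 2 * Cmod (Cminus l (zs n))).
    { specialize (HF l (zs n) ltac:(lra) Hzn).
      replace (Cminus (F l) (F (zs n))) with
        (Cplus (Cminus (Cminus (F l) (F (zs n))) (Cmult a (Cminus l (zs n)))) (Cmult a (Cminus l (zs n))))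
        by (unfold Cminus; ring).
      eapply Rle_trans. apply Cmod_triangle. rewrite Cmod_mult. lra. }
    assert (E2 : Cmod (Cminus (F (zs n)) w) <= Cmod a * ((1/2) ^ n * d0)).
    { replace (Cminus (F (zs n)) w) with (Cmult (Copp a) (Cminus (zs (S n)) (zs n)))
        by (rewrite Hstep; unfold Cminus, Cdiv; field; auto).
      rewrite Cmod_mult, Cmod_opp. apply Rmult_le_compat_l; auto. apply Cmod_ge_0. }
    assert (E3 : (1/2) ^ n * d0 <= e1).
    { assert (0 <= (1/2) ^ n) by (apply pow_le; lra).
      apply Rle_trans with (e1 / (d0 + 1) * (d0 + 1)).
      assert ((1/2) ^ n * d0 <= (1/2) ^ n * (d0 + 1)) by nra.
      assert ((1/2) ^ n * (d0 + 1) <= e1 / (d0 + 1) * (d0 + 1)) by (apply Rmult_le_compat_r; lra). lra.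
      right. field. lra. }
    generalize (Cmod_tri3 (F l) (F (zs n)) w). intros T.
    assert (Cmod a * ((1/2) ^ n * d0) <= Cmod a * e1) by (apply Rmult_le_compat_l; lra).
    assert (3 * Cmod a / 2 * Cmod (Cminus l (zs n)) <= 3 * Cmod a / 2 * e1) by (apply Rmult_le_compat_l; lra).
    assert (Hee : (3 * Cmod a + 1) * e1 = eps) by (unfold e1; field; lra).
    assert (0 < e1) by auto. nra. }
  assert (Hz : Cmod (Cminus (F l) w) = 0) by (generalize (Cmod_ge_0 (Cminus (F l) w)); lra).
  apply Cmod_eq_0 in Hz. replace (F l) with (Cplus (Cminus (F l) w) w) by (unfold Cminus; ring).
  rewrite Hz. ring.
Qed.


Lemma frechet (u : C -> R) (z0 : C) : exparts u -> continuous (dx u) z0 -> continuous (dy u) z0 ->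
  forall eps, 0 < eps -> exists r, 0 < r /\ forall z w, bx z0 r z -> bx z0 r w ->
  Rabs (u w - u z - (dx u z0 * (fst w - fst z) + dy u z0 * (snd w - snd z)))
    <= eps * (Rabs (fst w - fst z) + Rabs (snd w - snd z)).
Proof.
  intros Hex Hx Hy eps He.
  destruct (cont_eps _ _ Hx eps He) as [r1 [Hr1 H1]].
  destruct (cont_eps _ _ Hy eps He) as [r2 [Hr2 H2]].
  exists (Rmin r1 r2). split. apply Rmin_pos; auto.
  apply est2; auto. intros z [Hz1 Hz2].
  assert (bx z0 r1 z) by (split; eapply Rlt_le_trans; eauto; apply Rmin_l).
  assert (bx z0 r2 z) by (split; eapply Rlt_le_trans; eauto; apply Rmin_r).
  split; left; auto.
Qed.

Lemma prod_lb (x y a b : R) : Rabs x <= a -> Rabs y <= b -> - (a * b) <= x * y.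
Proof.
  intros Hx Hy. assert (Rabs (x * y) <= a * b).
  { rewrite Rabs_mult. apply Rmult_le_compat; auto; apply Rabs_pos. }
  generalize (Rle_abs (- (x * y))). rewrite Rabs_Ropp. lra.
Qed.

Lemma lin_solve (a11 a12 a21 a22 k1 k2 h e1 e2 E1 E2 D bnd : R) :
  D = a11 * a22 - a12 * a21 -> 0 < D -> h <> 0 ->
  a11 * k1 + a12 * k2 = h * e1 - E1 -> a21 * k1 + a22 * k2 = h * e2 - E2 ->
  Rabs E1 <= bnd * Rabs h -> Rabs E2 <= bnd * Rabs h ->
  Rabs (k1 / h - (a22 * e1 - a12 * e2) / D) <= (Rabs a22 + Rabs a12) * bnd / D /\
  Rabs (k2 / h - (a11 * e2 - a21 * e1) / D) <= (Rabs a11 + Rabs a21) * bnd / D.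
Proof.
  intros ED HD Hh Eq1 Eq2 B1 B2.
  assert (Hk1 : D * k1 = a22 * (h * e1 - E1) - a12 * (h * e2 - E2)) by (rewrite <- Eq1, <- Eq2, ED; ring).
  assert (Hk2 : D * k2 = a11 * (h * e2 - E2) - a21 * (h * e1 - E1)) by (rewrite <- Eq1, <- Eq2, ED; ring).
  assert (Hah : 0 < Rabs h) by (apply Rabs_pos_lt; auto).
  assert (R1 : k1 / h - (a22 * e1 - a12 * e2) / D = (- (a22 * E1) + a12 * E2) / (D * h)).
  { assert (K1 : k1 = (a22 * (h * e1 - E1) - a12 * (h * e2 - E2)) / D).
    { apply (Rmult_eq_reg_l D); [rewrite <- Hk1; field; lra | lra]. }
    rewrite K1. field. split; lra. }
  assert (R2 : k2 / h - (a11 * e2 - a21 * e1) / D = (- (a11 * E2) + a21 * E1) / (D * h)).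
  { assert (K2 : k2 = (a11 * (h * e2 - E2) - a21 * (h * e1 - E1)) / D).
    { apply (Rmult_eq_reg_l D); [rewrite <- Hk2; field; lra | lra]. }
    rewrite K2. field. split; lra. }
  rewrite R1, R2. unfold Rdiv. rewrite !Rabs_mult. rewrite Rabs_inv by (apply Rmult_integral_contrapositive; split; lra).
  rewrite Rabs_mult, (Rabs_right D) by lra.
  assert (HX : forall x y u v, Rabs (- (x * u) + y * v) <= (Rabs x + Rabs y) * (bnd * Rabs h) ->
             Rabs (- (x * u) + y * v) * / (D * Rabs h) <= (Rabs x + Rabs y) * bnd * / D).
  { intros x y u v Hxy. apply Rmult_le_reg_r with (D * Rabs h). apply Rmult_lt_0_compat; lra.
    replace (Rabs (- (x * u) + y * v) * / (D * Rabs h) * (D * Rabs h)) with (Rabs (- (x * u) + y * v)) by (field; lra).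
    replace ((Rabs x + Rabs y) * bnd * / D * (D * Rabs h)) with ((Rabs x + Rabs y) * (bnd * Rabs h)) by (field; lra).
    auto. }
  assert (HY : forall x y u v, Rabs u <= bnd * Rabs h -> Rabs v <= bnd * Rabs h ->
             Rabs (- (x * u) + y * v) <= (Rabs x + Rabs y) * (bnd * Rabs h)).
  { intros x y u v Hu Hv. eapply Rle_trans. apply Rabs_triang. rewrite Rabs_Ropp, !Rabs_mult.
    assert (Rabs x * Rabs u <= Rabs x * (bnd * Rabs h)) by (apply Rmult_le_compat_l; auto; apply Rabs_pos).
    assert (Rabs y * Rabs v <= Rabs y * (bnd * Rabs h)) by (apply Rmult_le_compat_l; auto; apply Rabs_pos).
    lra. }
  split; apply HX; apply HY; auto.
Qed.

Section Main.
Variable Gamma : C -> Prop.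
Variables eta etainv : C -> C.
Hypothesis HC1 : C1_on (fun _ => True) eta.
Hypothesis HT : forall w, onT w <-> exists z, Gamma z /\ eta z = w.
Hypothesis Hinv1 : forall w, onT w -> Gamma (etainv w) /\ eta (etainv w) = w.
Hypothesis Hinv2 : forall z, Gamma z -> etainv (eta z) = z.
Hypothesis Hinvd : forall t, differentiable_curve_at (lift etainv) t.
Hypothesis Hdbar : forall z, Gamma z -> dbar eta z = (0, 0).

Definition uu (z : C) : R := fst (eta z).
Definition vv (z : C) : R := snd (eta z).
Definition ux z := dx uu z.
Definition uy z := dy uu z.
Definition vx z := dx vv z.
Definition vy z := dy vv z.
Definition det z := ux z * vy z - uy z * vx z.
Definition gam (t : R) : C := etainv (circ t).

Lemma ex_uu : exparts uu.
Proof. intros z. destruct HC1 as [H _]. destruct (H z I) as [H1 [H2 _]]. split; auto. Qed.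
Lemma ex_vv : exparts vv.
Proof. intros z. destruct HC1 as [_ H]. destruct (H z I) as [H1 [H2 _]]. split; auto. Qed.
Lemma cont_ux z : continuous ux z.
Proof. destruct HC1 as [H _]. apply (H z I). Qed.
Lemma cont_uy z : continuous uy z.
Proof. destruct HC1 as [H _]. apply (H z I). Qed.
Lemma cont_vx z : continuous vx z.
Proof. destruct HC1 as [_ H]. apply (H z I). Qed.
Lemma cont_vy z : continuous vy z.
Proof. destruct HC1 as [_ H]. apply (H z I). Qed.

Lemma CR p : Gamma p -> vy p = ux p /\ uy p = - vx p.
Proof.
  intros Hp. specialize (Hdbar p Hp). unfold dbar in Hdbar. injection Hdbar; intros E2 E1.
  unfold ux, uy, vx, vy, uu, vv. split; lra.
Qed.

Lemma eta_pair z : (uu z, vv z) = eta z.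
Proof. unfold uu, vv. destruct (eta z); auto. Qed.

Lemma gam_on t : Gamma (gam t) /\ eta (gam t) = circ t.
Proof. apply Hinv1, onT_circ. Qed.

Lemma gam_param q : Gamma q -> exists t, -PI <= t <= PI /\ gam t = q.
Proof.
  intros Hq. assert (H : onT (eta q)) by (apply HT; eauto).
  destruct (polar _ H) as [t [Ht E]]. exists t. split; auto. unfold gam. rewrite E. auto.
Qed.

Lemma gam_derive t : ex_derive (fun s => fst (gam s)) t /\ ex_derive (fun s => snd (gam s)) t.
Proof. apply (Hinvd t). Qed.

Lemma onT_eta q : Gamma q -> onT (eta q).
Proof. intros Hq. apply HT; eauto. Qed.

Lemma a_nonzero p : Gamma p -> (ux p, vx p) <> (0, 0).
Proof.
  intros Hp E. injection E; intros Evx Eux.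
  destruct (CR p Hp) as [Evy Euy]. rewrite Evx, Ropp_0 in Euy. rewrite Eux in Evy.
  destruct (gam_param p Hp) as [t0 [_ Ht0]].
  destruct (gam_derive t0) as [D1 D2].
  assert (Z : forall w, exparts w -> continuous (dx w) p -> continuous (dy w) p ->
      dx w p = 0 -> dy w p = 0 ->
      forall eps, 0 < eps -> exists r, 0 < r /\ forall z, bx p r z ->
      Rabs (w z - w p) <= eps * (Rabs (fst z - fst p) + Rabs (snd z - snd p))).
  { intros w Hw Cx Cy Zx Zy eps He. destruct (frechet w p Hw Cx Cy eps He) as [r [Hr H]].
    exists r. split; auto. intros z Hz. specialize (H p z).
    rewrite Zx, Zy in H. replace (w z - w p) with (w z - w p - (0 * (fst z - fst p) + 0 * (snd z - snd p))) by ring.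
    apply H; auto. split; rewrite Rminus_diag, Rabs_R0; auto. }
  assert (Dc : derivable_pt_lim cos t0 0).
  { apply (chain_zero uu (fun s => fst (gam s)) (fun s => snd (gam s)) cos t0 p); auto.
    rewrite Ht0; auto. rewrite Ht0; auto.
    intros t. rewrite <- surjective_pairing. unfold uu. rewrite (proj2 (gam_on t)). auto.
    apply Z. apply ex_uu. apply cont_ux. apply cont_uy. exact Eux. exact Euy. }
  assert (Ds : derivable_pt_lim sin t0 0).
  { apply (chain_zero vv (fun s => fst (gam s)) (fun s => snd (gam s)) sin t0 p); auto.
    rewrite Ht0; auto. rewrite Ht0; auto.
    intros t. rewrite <- surjective_pairing. unfold vv. rewrite (proj2 (gam_on t)). auto.
    apply Z. apply ex_vv. apply cont_vx. apply cont_vy. exact Evx. exact Evy. }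
  generalize (uniqueness_limite _ _ _ _ Dc (derivable_pt_lim_cos t0)).
  generalize (uniqueness_limite _ _ _ _ Ds (derivable_pt_lim_sin t0)).
  generalize (sin2_cos2 t0). unfold Rsqr. intros. nra.
Qed.

Definition av (p : C) : C := (ux p, vx p).
Definition Av (p : C) : R := Cmod (av p).

Lemma Av_pos p : Gamma p -> 0 < Av p.
Proof. intros Hp. apply Cmod_gt_0. apply (a_nonzero p Hp). Qed.

Definition LOC (p : C) (r : R) : Prop :=
  0 < r /\ r <= Av p /\ r <= / Av p /\
  (forall z w, bx p r z -> bx p r w ->
     Cmod (Cminus (Cminus (eta w) (eta z)) (Cmult (av p) (Cminus w z))) <= Av p / 2 * Cmod (Cminus w z)) /\
  (forall z, bx p r z -> 0 < det z).

Lemma bx_mono p r r' z : r <= r' -> bx p r z -> bx p r' z.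
Proof. intros H [H1 H2]; split; lra. Qed.

Lemma local p : Gamma p -> exists r, LOC p r.
Proof.
  intros Hp. assert (HA := Av_pos p Hp).
  set (A := Av p) in *. set (eps := A / 8).
  assert (He : 0 < eps) by (unfold eps; lra).
  destruct (frechet uu p ex_uu (cont_ux p) (cont_uy p) eps He) as [r1 [Hr1 F1]].
  destruct (frechet vv p ex_vv (cont_vx p) (cont_vy p) eps He) as [r2 [Hr2 F2]].
  destruct (cont_eps _ _ (cont_ux p) eps He) as [r3 [Hr3 C3]].
  destruct (cont_eps _ _ (cont_uy p) eps He) as [r4 [Hr4 C4]].
  destruct (cont_eps _ _ (cont_vx p) eps He) as [r5 [Hr5 C5]].
  destruct (cont_eps _ _ (cont_vy p) eps He) as [r6 [Hr6 C6]].
  set (r := Rmin (Rmin (Rmin r1 r2) (Rmin r3 r4)) (Rmin (Rmin r5 r6) (Rmin A (/ A)))).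
  assert (Hr : 0 < r) by (unfold r; repeat apply Rmin_pos; auto; apply Rinv_0_lt_compat; auto).
  assert (R1 : r <= r1) by (unfold r; repeat (apply Rle_trans with (1 := Rmin_l _ _)); lra).
  assert (R2 : r <= r2).
  { unfold r. eapply Rle_trans. apply Rmin_l. eapply Rle_trans. apply Rmin_l. apply Rmin_r. }
  assert (R3 : r <= r3).
  { unfold r. eapply Rle_trans. apply Rmin_l. eapply Rle_trans. apply Rmin_r. apply Rmin_l. }
  assert (R4 : r <= r4).
  { unfold r. eapply Rle_trans. apply Rmin_l. eapply Rle_trans. apply Rmin_r. apply Rmin_r. }
  assert (R5 : r <= r5).
  { unfold r. eapply Rle_trans. apply Rmin_r. eapply Rle_trans. apply Rmin_l. apply Rmin_l. }
  assert (R6 : r <= r6).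
  { unfold r. eapply Rle_trans. apply Rmin_r. eapply Rle_trans. apply Rmin_l. apply Rmin_r. }
  assert (R7 : r <= A).
  { unfold r. eapply Rle_trans. apply Rmin_r. eapply Rle_trans. apply Rmin_r. apply Rmin_l. }
  assert (R8 : r <= / A).
  { unfold r. eapply Rle_trans. apply Rmin_r. eapply Rle_trans. apply Rmin_r. apply Rmin_r. }
  destruct (CR p Hp) as [Evy Euy].
  assert (HAsq : A * A = ux p * ux p + vx p * vx p) by (unfold A, Av, av; rewrite Cmod_sq; auto).
  assert (Hal : Rabs (ux p) <= A) by (unfold A, Av, av; apply (Cmod_fst (ux p, vx p))).
  assert (Hbe : Rabs (vx p) <= A) by (unfold A, Av, av; apply (Cmod_snd (ux p, vx p))).
  exists r. split; [auto|split; [auto|split; [auto|split]]].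
  - intros z w Hz Hw.
    specialize (F1 z w (bx_mono _ _ _ _ R1 Hz) (bx_mono _ _ _ _ R1 Hw)).
    specialize (F2 z w (bx_mono _ _ _ _ R2 Hz) (bx_mono _ _ _ _ R2 Hw)).
    eapply Rle_trans. apply Cmod_le_sum. rewrite !Cminus_fst, !Cminus_snd.
    unfold av. simpl (fst (Cmult _ _)). simpl (snd (Cmult _ _)).
    change (dx uu p) with (ux p) in F1. change (dy uu p) with (uy p) in F1.
    change (dx vv p) with (vx p) in F2. change (dy vv p) with (vy p) in F2.
    rewrite Euy in F1. rewrite Evy in F2.
    generalize (Cmod_fst (Cminus w z)) (Cmod_snd (Cminus w z)). rewrite Cminus_fst, Cminus_snd. intros M1 M2.
    assert (Q1 : fst (eta w) - fst (eta z) - (ux p * (fst w + - fst z) - vx p * (snd w + - snd z)) =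
       uu w - uu z - (ux p * (fst w - fst z) + - vx p * (snd w - snd z))) by (unfold uu; ring).
    assert (Q2 : snd (eta w) - snd (eta z) - (ux p * (snd w + - snd z) + vx p * (fst w + - fst z)) =
       vv w - vv z - (vx p * (fst w - fst z) + ux p * (snd w - snd z))) by (unfold vv; ring).
    rewrite Q1, Q2.
    assert (A / 8 * (Rabs (fst w - fst z) + Rabs (snd w - snd z)) <= A / 8 * (2 * Cmod (Cminus w z)))
      by (apply Rmult_le_compat_l; lra).
    change (Av p) with A. unfold eps in F1, F2. lra.
  - intros z Hz.
    assert (E3 := C3 z (bx_mono _ _ _ _ R3 Hz)). assert (E4 := C4 z (bx_mono _ _ _ _ R4 Hz)).
    assert (E5 := C5 z (bx_mono _ _ _ _ R5 Hz)). assert (E6 := C6 z (bx_mono _ _ _ _ R6 Hz)).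
    rewrite Euy in E4. rewrite Evy in E6.
    unfold det.
    set (e1 := ux z - ux p) in *. set (e2 := uy z - - vx p) in *.
    set (e3 := vx z - vx p) in *. set (e4 := vy z - ux p) in *.
    replace (ux z * vy z - uy z * vx z) with
      ((ux p * ux p + vx p * vx p) + ux p * e1 + ux p * e4 + vx p * e3 - vx p * e2 + e1 * e4 - e2 * e3)
      by (unfold e1, e2, e3, e4; ring).
    assert (P1 := prod_lb (ux p) e1 A eps Hal ltac:(lra)).
    assert (P2 := prod_lb (ux p) e4 A eps Hal ltac:(lra)).
    assert (P3 := prod_lb (vx p) e3 A eps Hbe ltac:(lra)).
    assert (P4 := prod_lb (vx p) (- e2) A eps Hbe ltac:(rewrite Rabs_Ropp; lra)).
    assert (P5 := prod_lb e1 e4 eps eps ltac:(lra) ltac:(lra)).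
    assert (P6 := prod_lb e2 (- e3) eps eps ltac:(lra) ltac:(rewrite Rabs_Ropp; lra)).
    unfold eps in *. nra.
Qed.

Lemma gam_cont s : forall eps, 0 < eps -> exists rho, 0 < rho /\
  forall t, Rabs (t - s) < rho -> bx (gam s) eps (gam t).
Proof.
  intros eps He. destruct (gam_derive s) as [D1 D2].
  destruct (exd_eps _ _ D1 eps He) as [r1 [Hr1 H1]].
  destruct (exd_eps _ _ D2 eps He) as [r2 [Hr2 H2]].
  exists (Rmin r1 r2). split. apply Rmin_pos; auto.
  intros t Ht. split.
  apply H1. eapply Rlt_le_trans; [apply Ht| apply Rmin_l].
  apply H2. eapply Rlt_le_trans; [apply Ht| apply Rmin_r].
Qed.

Lemma leb (Dl : C -> R) : (forall p, Gamma p -> 0 < Dl p) ->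
  exists d, 0 < d /\ forall q, Gamma q -> exists p, Gamma p /\ bx p (Dl p / 2) q /\ d <= Dl p.
Proof.
  intros HD.
  set (P := fun s rho => 0 < rho /\ forall t, Rabs (t - s) < rho -> bx (gam s) (Dl (gam s) / 2) (gam t)).
  assert (HP : forall s, exists rho, P s rho).
  { intros s. apply gam_cont. assert (0 < Dl (gam s)) by (apply HD, gam_on). lra. }
  set (rf := fun s => epsilon (inhabits 1) (P s)).
  assert (Hrf : forall s, P s (rf s)) by (intros s; apply epsilon_spec, HP).
  assert (Hpos : forall s, 0 < Rmin (rf s) (Dl (gam s))).
  { intros s. apply Rmin_pos. apply (Hrf s). apply HD, gam_on. }
  destruct (compactness_value_1d (-PI) PI (fun s => mkposreal _ (Hpos s))) as [d Hd].
  exists d. split. apply cond_pos.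
  intros q Hq. destruct (gam_param q Hq) as [x [Hx Ex]].
  specialize (Hd x Hx). apply NNPP in Hd. destruct Hd as [t [Ht [H1 H2]]]. simpl in H1, H2.
  exists (gam t). split. apply gam_on. split.
  - rewrite <- Ex. apply (proj2 (Hrf t)). eapply Rlt_le_trans. apply H1. apply Rmin_l.
  - eapply Rle_trans. apply H2. apply Rmin_r.
Qed.

Lemma unif : exists d, 0 < d /\ forall q, Gamma q -> exists a : C,
  2 * d <= Cmod a /\ Cmod a <= / (2 * d) /\
  (forall z w, bx q d z -> bx q d w ->
     Cmod (Cminus (Cminus (eta w) (eta z)) (Cmult a (Cminus w z))) <= Cmod a / 2 * Cmod (Cminus w z)) /\
  (forall z, bx q d z -> 0 < det z).
Proof.
  set (Q := fun p r => 0 < r /\ (Gamma p -> LOC p r)).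
  assert (HQ : forall p, exists r, Q p r).
  { intros p. destruct (classic (Gamma p)) as [Hp|Hp].
    destruct (local p Hp) as [r Hr]. exists r. split. apply Hr. auto.
    exists 1. split. lra. tauto. }
  set (Dl := fun p => epsilon (inhabits 1) (Q p)).
  assert (HDl : forall p, Q p (Dl p)) by (intros p; apply epsilon_spec, HQ).
  destruct (leb Dl (fun p _ => proj1 (HDl p))) as [d0 [Hd0 H]].
  exists (d0 / 2). split. lra.
  intros q Hq. destruct (H q Hq) as [p [Hp [Hpq Hdp]]].
  destruct (proj2 (HDl p) Hp) as [Hr [HrA [HrA' [Hest Hdet]]]].
  assert (Hsub : forall z, bx q (d0 / 2) z -> bx p (Dl p) z).
  { intros z [Hz1 Hz2]. destruct Hpq as [Hq1 Hq2]. split.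
    - replace (fst z - fst p) with ((fst z - fst q) + (fst q - fst p)) by ring.
      eapply Rle_lt_trans. apply Rabs_triang. lra.
    - replace (snd z - snd p) with ((snd z - snd q) + (snd q - snd p)) by ring.
      eapply Rle_lt_trans. apply Rabs_triang. lra. }
  exists (av p). split; [|split; [|split]].
  - change (Cmod (av p)) with (Av p). lra.
  - change (Cmod (av p)) with (Av p). replace (2 * (d0 / 2)) with d0 by field.
    assert (HA := Av_pos p Hp).
    apply Rle_trans with (/ Dl p). 
    replace (Av p) with (/ / Av p) by (field; lra). apply Rinv_le_contravar; auto.
    apply Rinv_le_contravar; auto.
  - intros z w Hz Hw. apply Hest; apply Hsub; auto.
  - intros z Hz. apply Hdet, Hsub; auto.
Qed.

Lemma gam_2PI t : gam (t + 2 * PI) = gam t.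
Proof. unfold gam. rewrite circ_2PI. auto. Qed.
Lemma gam_m2PI t : gam (t - 2 * PI) = gam t.
Proof. unfold gam. rewrite circ_m2PI. auto. Qed.

Lemma sep (d : R) : 0 < d -> exists sg, 0 < sg /\ forall q q', Gamma q -> Gamma q' ->
  Cmod (Cminus (eta q) (eta q')) < sg -> bx q d q'.
Proof.
  intros Hd.
  assert (U1 := Heine (fun s => fst (gam s)) (fun c => -(3*PI) <= c <= 3*PI) (compact_P3 _ _)
                 (fun x _ => exd_cont _ x (proj1 (gam_derive x))) (mkposreal d Hd)).
  assert (U2 := Heine (fun s => snd (gam s)) (fun c => -(3*PI) <= c <= 3*PI) (compact_P3 _ _)
                 (fun x _ => exd_cont _ x (proj2 (gam_derive x))) (mkposreal d Hd)).
  destruct U1 as [d1 U1]. destruct U2 as [d2 U2]. simpl in U1, U2.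
  assert (HPI := PI_RGT_0).
  set (del := Rmin (Rmin d1 d2) PI).
  assert (Hdel : 0 < del <= PI).
  { split. unfold del. repeat apply Rmin_pos; try apply cond_pos; lra. apply Rmin_r. }
  destruct (circ_sep del Hdel) as [k [Hk Hsep]].
  exists k. split; auto. intros q q' Hq Hq' Hc.
  destruct (gam_param q Hq) as [t [Ht Et]]. destruct (gam_param q' Hq') as [t' [Ht' Et']].
  assert (Ex : exists t'', -(3*PI) <= t'' <= 3*PI /\ Rabs (t - t'') <= PI /\ gam t'' = q').
  { destruct (Rle_dec (Rabs (t - t')) PI) as [H|H].
    - exists t'. split. lra. split; auto.
    - destruct (Rle_dec 0 (t - t')) as [H0|H0].
      + rewrite Rabs_right in H by lra. exists (t' + 2 * PI). split. lra. split.
        rewrite Rabs_left1 by lra. lra. rewrite gam_2PI; auto.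
      + rewrite Rabs_left in H by lra. exists (t' - 2 * PI). split. lra. split.
        rewrite Rabs_right by lra. lra. rewrite gam_m2PI; auto. }
  destruct Ex as [t'' [Ht'' [Htt Et'']]].
  assert (Eq1 : eta q = circ t) by (rewrite <- Et; apply gam_on).
  assert (Eq2 : eta q' = circ t'') by (rewrite <- Et''; apply gam_on).
  rewrite Eq1, Eq2 in Hc. specialize (Hsep t t'' Htt Hc).
  assert (H1 : Rabs (t - t'') < d1).
  { eapply Rlt_le_trans. apply Hsep. unfold del. eapply Rle_trans; apply Rmin_l. }
  assert (H2 : Rabs (t - t'') < d2).
  { eapply Rlt_le_trans. apply Hsep. unfold del. eapply Rle_trans. apply Rmin_l. apply Rmin_r. }
  assert (Hti : -(3*PI) <= t <= 3*PI) by lra.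
  specialize (U1 t t'' Hti Ht'' H1). specialize (U2 t t'' Hti Ht'' H2).
  rewrite Et, Et'' in U1, U2. split; rewrite Rabs_minus_sym; auto.
Qed.

Lemma bounded : exists B, 0 <= B /\ forall q, Gamma q -> Cmod q <= B.
Proof.
  set (f := fun s => Rabs (fst (gam s)) + Rabs (snd (gam s))).
  assert (HPI := PI_RGT_0).
  destruct (continuity_ab_maj f (-PI) PI ltac:(lra)) as [M [HM _]].
  { intros c _. unfold f. apply continuity_pt_plus.
    apply (continuity_pt_comp (fun s => fst (gam s)) Rabs). apply exd_cont, gam_derive. apply Rcontinuity_abs.
    apply (continuity_pt_comp (fun s => snd (gam s)) Rabs). apply exd_cont, gam_derive. apply Rcontinuity_abs. }
  exists (f M). split. unfold f. generalize (Rabs_pos (fst (gam M))) (Rabs_pos (snd (gam M))); lra.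
  intros q Hq. destruct (gam_param q Hq) as [t [Ht Et]].
  eapply Rle_trans. apply Cmod_le_sum. rewrite <- Et. apply (HM t Ht).
Qed.

Lemma Cmod_minus_le (x y : C) : Cmod (Cminus x y) <= Cmod x + Cmod y.
Proof. unfold Cminus. eapply Rle_trans. apply Cmod_triangle. rewrite Cmod_opp. lra. Qed.

Lemma not_bx_far (z w : C) (r : R) : ~ bx z r w -> r <= Cmod (Cminus w z).
Proof.
  intros H. destruct (Rlt_dec (Rabs (fst w - fst z)) r) as [H1|H1].
  destruct (Rlt_dec (Rabs (snd w - snd z)) r) as [H2|H2].
  - exfalso; apply H; split; auto.
  - generalize (Cmod_snd (Cminus w z)); rewrite Cminus_snd; lra.
  - generalize (Cmod_fst (Cminus w z)); rewrite Cminus_fst; lra.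
Qed.

Lemma bx_tri (p q z : C) (r s : R) : bx p r q -> bx q s z -> bx p (r + s) z.
Proof.
  intros [H1 H2] [H3 H4]. split.
  replace (fst z - fst p) with ((fst z - fst q) + (fst q - fst p)) by ring.
  eapply Rle_lt_trans. apply Rabs_triang. lra.
  replace (snd z - snd p) with ((snd z - snd q) + (snd q - snd p)) by ring.
  eapply Rle_lt_trans. apply Rabs_triang. lra.
Qed.

Lemma bx_sym (p z : C) r : bx p r z -> bx z r p.
Proof. intros [H1 H2]; split; rewrite Rabs_minus_sym; auto. Qed.

Lemma bx_Cmod (p z : C) r : bx p r z -> Cmod (Cminus z p) <= 2 * r.
Proof. intros [H1 H2]. eapply Rle_trans. apply Cmod_le_sum. rewrite Cminus_fst, Cminus_snd. lra. Qed.

Lemma Cmod_bx (p z : C) r : Cmod (Cminus z p) < r -> bx p r z.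
Proof.
  intros H. split. generalize (Cmod_fst (Cminus z p)); rewrite Cminus_fst; lra.
  generalize (Cmod_snd (Cminus z p)); rewrite Cminus_snd; lra.
Qed.

Lemma bx_open (q z : C) r : bx q r z -> exists e, 0 < e /\ forall y, bx z e y -> bx q r y.
Proof.
  intros [H1 H2]. exists (Rmin (r - Rabs (fst z - fst q)) (r - Rabs (snd z - snd q))).
  split. apply Rmin_pos; lra.
  intros y [H3 H4].
  assert (H5 : Rabs (fst y - fst z) < r - Rabs (fst z - fst q)) by (eapply Rlt_le_trans; [apply H3| apply Rmin_l]).
  assert (H6 : Rabs (snd y - snd z) < r - Rabs (snd z - snd q)) by (eapply Rlt_le_trans; [apply H4| apply Rmin_r]).
  split.
  replace (fst y - fst q) with ((fst y - fst z) + (fst z - fst q)) by ring.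
  eapply Rle_lt_trans. apply Rabs_triang. lra.
  replace (snd y - snd q) with ((snd y - snd z) + (snd z - snd q)) by ring.
  eapply Rle_lt_trans. apply Rabs_triang. lra.
Qed.

Section Build.
Variables d rho sg B : R.
Hypothesis Hd : 0 < d.
Hypothesis Hunif : forall q, Gamma q -> exists a : C,
  2 * d <= Cmod a /\ Cmod a <= / (2 * d) /\
  (forall z w, bx q d z -> bx q d w ->
     Cmod (Cminus (Cminus (eta w) (eta z)) (Cmult a (Cminus w z))) <= Cmod a / 2 * Cmod (Cminus w z)) /\
  (forall z, bx q d z -> 0 < det z).
Hypothesis Hsg : 0 < sg.
Hypothesis Hsep : forall q q', Gamma q -> Gamma q' -> Cmod (Cminus (eta q) (eta q')) < sg -> bx q (d / 4) q'.
Hypothesis HB : 0 <= B.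
Hypothesis Hbd : forall q, Gamma q -> Cmod q <= B.
Hypothesis Hrho : 0 < rho.
Hypothesis Hrho1 : rho <= d / 8.
Hypothesis Hrho2 : 4 * (3 / (4 * d)) * rho <= sg / 2.

Definition L := 3 / (4 * d).
Definition UU (z : C) : Prop := exists q, Gamma q /\ bx q rho z.

Lemma locb q z w : Gamma q -> bx q d z -> bx q d w ->
  d * Cmod (Cminus w z) <= Cmod (Cminus (eta w) (eta z)) /\
  Cmod (Cminus (eta w) (eta z)) <= L * Cmod (Cminus w z).
Proof.
  intros Hq Hz Hw. destruct (Hunif q Hq) as [a [Ha1 [Ha2 [Hest _]]]].
  specialize (Hest z w Hz Hw).
  set (D := Cminus w z) in *. set (E := Cminus (eta w) (eta z)) in *.
  assert (HD : 0 <= Cmod D) by apply Cmod_ge_0.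
  assert (T1 : Cmod E <= Cmod (Cminus E (Cmult a D)) + Cmod (Cmult a D)).
  { replace E with (Cplus (Cminus E (Cmult a D)) (Cmult a D)) at 1 by (unfold Cminus; ring). apply Cmod_triangle. }
  assert (T2 : Cmod (Cmult a D) <= Cmod (Cminus E (Cmult a D)) + Cmod E).
  { replace (Cmult a D) with (Cplus (Copp (Cminus E (Cmult a D))) E) at 1 by (unfold Cminus; ring).
    eapply Rle_trans. apply Cmod_triangle. rewrite Cmod_opp. lra. }
  rewrite Cmod_mult in T1, T2.
  split.
  - assert (d * Cmod D <= Cmod a / 2 * Cmod D) by (apply Rmult_le_compat_r; lra). lra.
  - unfold L. assert (Cmod a <= / (2 * d)) by auto.
    assert (3 / 2 * Cmod a * Cmod D <= 3 / 2 * / (2 * d) * Cmod D) by (apply Rmult_le_compat_r; lra).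
    replace (3 / (4 * d)) with (3 / 2 * / (2 * d)) by (field; lra). lra.
Qed.

Lemma L_pos : 0 < L.
Proof. unfold L. apply Rdiv_lt_0_compat; lra. Qed.

Lemma UU_Gamma q : Gamma q -> UU q.
Proof. intros Hq. exists q. split; auto. split; rewrite Rminus_diag, Rabs_R0; auto. Qed.

Lemma UU_open : open UU.
Proof.
  intros z [q [Hq Hz]]. destruct (bx_open q z rho Hz) as [e [He H]].
  exists (mkposreal e He). intros y Hy. apply ball_bx in Hy. exists q. split; auto.
Qed.

Lemma Cmod_le_shift (z q : C) : Cmod z <= Cmod (Cminus z q) + Cmod q.
Proof. replace z with (Cplus (Cminus z q) q) at 1 by (unfold Cminus; ring). apply Cmod_triangle. Qed.

Definition c0 := Rmin d (sg / (4 * (B + 2 * rho))).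
Definition C0 := Rmax L (2 * (2 + 4 * L * rho) / d).

Lemma c0_pos : 0 < c0.
Proof. unfold c0. apply Rmin_pos; auto. apply Rdiv_lt_0_compat; lra. Qed.
Lemma C0_pos : 0 < C0.
Proof. unfold C0. eapply Rlt_le_trans. apply L_pos. apply Rmax_l. Qed.

Lemma bilip z w : UU z -> UU w ->
  c0 * Cmod (Cminus z w) <= Cmod (Cminus (eta z) (eta w)) /\
  Cmod (Cminus (eta z) (eta w)) <= C0 * Cmod (Cminus z w).
Proof.
  intros [q [Hq Hz]] [q' [Hq' Hw]].
  assert (HL := L_pos).
  assert (HD : 0 <= Cmod (Cminus z w)) by apply Cmod_ge_0.
  assert (Hzd : bx q d z) by (apply (bx_mono _ rho); auto; lra).
  assert (Hqd : bx q d q) by (split; rewrite Rminus_diag, Rabs_R0; auto).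
  assert (Hwd' : bx q' d w) by (apply (bx_mono _ rho); auto; lra).
  assert (Hqd' : bx q' d q') by (split; rewrite Rminus_diag, Rabs_R0; auto).
  destruct (classic (bx z (d / 2) w)) as [Hnear|Hfar].
  - assert (Hwd : bx q d w) by (apply (bx_mono _ (rho + d / 2)); [lra| apply (bx_tri q z w); auto]).
    destruct (locb q z w Hq Hzd Hwd) as [H1 H2].
    rewrite (Cmod_sym w z), (Cmod_sym (eta w) (eta z)) in *. split.
    + assert (c0 * Cmod (Cminus z w) <= d * Cmod (Cminus z w)) by (apply Rmult_le_compat_r; auto; apply Rmin_l). lra.
    + assert (L * Cmod (Cminus z w) <= C0 * Cmod (Cminus z w)) by (apply Rmult_le_compat_r; auto; apply Rmax_l). lra.
  - assert (Hfar' := not_bx_far z w _ Hfar). rewrite Cmod_sym in Hfar'.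
    assert (Ez : Cmod (Cminus (eta z) (eta q)) <= L * (2 * rho)).
    { destruct (locb q q z Hq Hqd Hzd) as [_ H]. eapply Rle_trans. apply H.
      apply Rmult_le_compat_l; auto. lra. apply bx_Cmod; auto. }
    assert (Ew : Cmod (Cminus (eta w) (eta q')) <= L * (2 * rho)).
    { destruct (locb q' q' w Hq' Hqd' Hwd') as [_ H]. eapply Rle_trans. apply H.
      apply Rmult_le_compat_l; auto. lra. apply bx_Cmod; auto. }
    assert (Hq1 : Cmod (eta q) = 1) by apply (onT_eta q Hq).
    assert (Hq1' : Cmod (eta q') = 1) by apply (onT_eta q' Hq').
    split.
    + assert (Hfq : ~ bx q (d / 4) q').
      { intros Hb. apply Hfar. apply (bx_mono _ (rho + d / 4 + rho)). lra.
        apply (bx_tri z q' w). apply (bx_tri z q q'). apply bx_sym; auto. auto. auto. }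
      assert (Hsg' : sg <= Cmod (Cminus (eta q) (eta q'))).
      { destruct (Rlt_dec (Cmod (Cminus (eta q) (eta q'))) sg) as [H|H]; [|lra].
        exfalso. apply Hfq. apply Hsep; auto. }
      generalize (Cmod_tri3 (eta q) (eta z) (eta q')) (Cmod_tri3 (eta z) (eta w) (eta q')).
      rewrite (Cmod_sym (eta q) (eta z)). intros T1 T2.
      assert (Hlow : sg / 2 <= Cmod (Cminus (eta z) (eta w))).
      { replace (4 * (3 / (4 * d)) * rho) with (4 * L * rho) in Hrho2 by (unfold L; auto). lra. }
      assert (Hzw : Cmod (Cminus z w) <= 2 * (B + 2 * rho)).
      { eapply Rle_trans. apply Cmod_minus_le.
        generalize (Cmod_le_shift z q) (Cmod_le_shift w q') (bx_Cmod q z rho Hz) (bx_Cmod q' w rho Hw)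
          (Hbd q Hq) (Hbd q' Hq'). lra. }
      assert (HBr : 0 < B + 2 * rho) by lra.
      assert (c0 * Cmod (Cminus z w) <= sg / (4 * (B + 2 * rho)) * (2 * (B + 2 * rho))).
      { apply Rmult_le_compat; auto. left; apply c0_pos. apply Rmin_r. }
      replace (sg / (4 * (B + 2 * rho)) * (2 * (B + 2 * rho))) with (sg / 2) in H by (field; lra). lra.
    + generalize (Cmod_tri3 (eta z) (eta q) (eta w)) (Cmod_tri3 (eta q) (eta q') (eta w))
        (Cmod_minus_le (eta q) (eta q')). rewrite (Cmod_sym (eta q') (eta w)). intros T1 T2 T3.
      assert (Hup : Cmod (Cminus (eta z) (eta w)) <= 2 + 4 * L * rho) by lra.
      assert (0 <= 2 + 4 * L * rho) by (assert (0 <= L * rho) by (apply Rmult_le_pos; lra); lra).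
      assert ((2 + 4 * L * rho) <= 2 * (2 + 4 * L * rho) / d * Cmod (Cminus z w)).
      { apply Rle_trans with (2 * (2 + 4 * L * rho) / d * (d / 2)). right; field; lra.
        apply Rmult_le_compat_l; auto. apply Rdiv_le_0_compat; lra. }
      assert (2 * (2 + 4 * L * rho) / d * Cmod (Cminus z w) <= C0 * Cmod (Cminus z w))
        by (apply Rmult_le_compat_r; auto; apply Rmax_r). lra.
Qed.

Lemma inj z w : UU z -> UU w -> eta z = eta w -> z = w.
Proof.
  intros Hz Hw E. destruct (bilip z w Hz Hw) as [H _]. rewrite E, Cmod_self in H.
  assert (HC := c0_pos). assert (H0 : Cmod (Cminus z w) = 0).
  { generalize (Cmod_ge_0 (Cminus z w)); intros. destruct (Req_dec (Cmod (Cminus z w)) 0); auto. nra. }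
  apply Cmod_eq_0 in H0. replace z with (Cplus (Cminus z w) w) by (unfold Cminus; ring). rewrite H0. ring.
Qed.

Definition VV (w : C) : Prop := exists z, UU z /\ eta z = w.

Lemma bx_Cmod_lt (p z : C) r : bx p r z -> Cmod (Cminus z p) < 2 * r.
Proof. intros [H1 H2]. eapply Rle_lt_trans. apply Cmod_le_sum. rewrite Cminus_fst, Cminus_snd. lra. Qed.

Lemma VV_open : open VV.
Proof.
  intros w0 [z0 [[q [Hq Hz0]] E0]].
  destruct (bx_open q z0 rho Hz0) as [e [He Hsub]].
  destruct (Hunif q Hq) as [a [Ha1 [Ha2 [Hest _]]]].
  assert (Hpos : 0 < e * d / 4) by (apply Rdiv_lt_0_compat; [apply Rmult_lt_0_compat|]; lra).
  exists (mkposreal _ Hpos). intros w Hw. apply ball_bx in Hw. simpl in Hw.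
  assert (Hw' := bx_Cmod_lt _ _ _ Hw).
  assert (Ha0 : a <> 0%C) by (intros E; rewrite E, Cmod_0 in Ha1; lra).
  destruct (contraction eta a z0 w (e / 2) Ha0) as [z [Hz Ez]].
  - intros x x' Hx Hx'.
    assert (Bx : bx q d x) by (apply (bx_mono _ rho); [lra| apply Hsub, Cmod_bx; lra]).
    assert (Bx' : bx q d x') by (apply (bx_mono _ rho); [lra| apply Hsub, Cmod_bx; lra]).
    apply (Hest x' x Bx' Bx).
  - rewrite E0. apply Rle_trans with (2 * ((e * d / 2) / (2 * d))).
    + apply Rmult_le_compat_l. lra. unfold Rdiv. apply Rmult_le_compat. apply Cmod_ge_0.
      left; apply Rinv_0_lt_compat; apply Cmod_gt_0; auto. lra.
      apply Rinv_le_contravar; lra.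
    + right. field. lra.
  - exists z. split; auto. exists q. split; auto. apply Hsub, Cmod_bx. lra.
Qed.

Lemma T_VV w : onT w -> VV w.
Proof. intros Hw. destruct (Hinv1 w Hw) as [H1 H2]. exists (etainv w). split; auto. apply UU_Gamma; auto. Qed.

Definition gg (w : C) : C := epsilon (@inhabits C (0, 0)) (fun z => UU z /\ eta z = w).

Lemma gg_spec w : VV w -> UU (gg w) /\ eta (gg w) = w.
Proof. intros H. apply (epsilon_spec (@inhabits C (0, 0)) (fun z => UU z /\ eta z = w) H). Qed.

Lemma gg_eta z : UU z -> gg (eta z) = z.
Proof.
  intros Hz. assert (H : VV (eta z)) by (exists z; auto). destruct (gg_spec _ H) as [H1 H2].
  apply inj; auto.
Qed.

Lemma gg_lip w w' : VV w -> VV w' -> c0 * Cmod (Cminus (gg w) (gg w')) <= Cmod (Cminus w w').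
Proof.
  intros Hw Hw'. destruct (gg_spec w Hw) as [H1 E1]. destruct (gg_spec w' Hw') as [H2 E2].
  destruct (bilip _ _ H1 H2) as [H _]. rewrite E1, E2 in H. auto.
Qed.

Lemma VV_loc w0 : VV w0 -> exists r, 0 < r /\ forall w, bx w0 r w -> VV w.
Proof.
  intros H. destruct (VV_open w0 H) as [r Hr]. exists r. split. apply cond_pos.
  intros w Hw. apply Hr. apply ball_bx; auto.
Qed.

Lemma gg_cont w0 : VV w0 -> continuous gg w0.
Proof.
  intros H0. apply filterlim_locally. intros eps.
  destruct (VV_loc w0 H0) as [r [Hr Hloc]].
  assert (HC := c0_pos).
  assert (Hpos : 0 < Rmin r (eps * c0 / 2)).
  { apply Rmin_pos; auto. apply Rdiv_lt_0_compat; [apply Rmult_lt_0_compat; [apply cond_pos|]|]; lra. }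
  exists (mkposreal _ Hpos). intros w Hw. apply ball_bx in Hw. simpl in Hw.
  apply ball_bx. apply Cmod_bx.
  assert (Hw1 : VV w) by (apply Hloc; apply (bx_mono _ _ _ _ (Rmin_l _ _) Hw)).
  assert (L1 := gg_lip w w0 Hw1 H0).
  assert (L2 := bx_Cmod_lt _ _ _ Hw).
  assert (Rmin r (eps * c0 / 2) <= eps * c0 / 2) by apply Rmin_r.
  apply Rmult_lt_reg_l with c0; auto. lra.
Qed.

Lemma UU_det z : UU z -> 0 < det z.
Proof.
  intros [q [Hq Hz]]. destruct (Hunif q Hq) as [a [_ [_ [_ Hdet]]]]. apply Hdet.
  apply (bx_mono _ rho); auto. lra.
Qed.

Lemma gg_deriv w0 e1 e2 : VV w0 -> forall eps, 0 < eps -> exists del, 0 < del /\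
  forall h, h <> 0 -> Rabs h < del ->
  Rabs ((fst (gg (fst w0 + h * e1, snd w0 + h * e2)) - fst (gg w0)) / h
        - (vy (gg w0) * e1 - uy (gg w0) * e2) / det (gg w0)) < eps /\
  Rabs ((snd (gg (fst w0 + h * e1, snd w0 + h * e2)) - snd (gg w0)) / h
        - (ux (gg w0) * e2 - vx (gg w0) * e1) / det (gg w0)) < eps.
Proof.
  intros H0 eps He.
  destruct (gg_spec w0 H0) as [Hz0 Ez0].
  set (z0 := gg w0) in *.
  assert (HD := UU_det z0 Hz0). set (D := det z0) in *.
  set (K := Rabs (ux z0) + Rabs (uy z0) + Rabs (vx z0) + Rabs (vy z0) + 1).
  set (S := Rabs e1 + Rabs e2 + 1).
  assert (HK : 0 < K) by (unfold K; generalize (Rabs_pos (ux z0)) (Rabs_pos (uy z0)) (Rabs_pos (vx z0)) (Rabs_pos (vy z0)); lra).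
  assert (HS : 0 < S) by (unfold S; generalize (Rabs_pos e1) (Rabs_pos e2); lra).
  assert (HC := c0_pos).
  set (ep := eps * c0 * D / (4 * K * S)).
  assert (Hep : 0 < ep) by (unfold ep; apply Rdiv_lt_0_compat; repeat apply Rmult_lt_0_compat; lra).
  destruct (frechet uu z0 ex_uu (cont_ux z0) (cont_uy z0) ep Hep) as [r1 [Hr1 F1]].
  destruct (frechet vv z0 ex_vv (cont_vx z0) (cont_vy z0) ep Hep) as [r2 [Hr2 F2]].
  destruct (VV_loc w0 H0) as [r0 [Hr0 Hloc]].
  assert (Hdel : 0 < Rmin (r0 / S) (Rmin r1 r2 * c0 / S)).
  { apply Rmin_pos. apply Rdiv_lt_0_compat; lra. apply Rdiv_lt_0_compat; auto.
    apply Rmult_lt_0_compat; auto. apply Rmin_pos; auto. }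
  exists (Rmin (r0 / S) (Rmin r1 r2 * c0 / S)). split; auto.
  intros h Hh Hhd.
  assert (Hh1 : Rabs h < r0 / S) by (eapply Rlt_le_trans; [apply Hhd| apply Rmin_l]).
  assert (Hh2 : Rabs h < Rmin r1 r2 * c0 / S) by (eapply Rlt_le_trans; [apply Hhd| apply Rmin_r]).
  assert (Hhp : 0 < Rabs h) by (apply Rabs_pos_lt; auto).
  set (w := (fst w0 + h * e1, snd w0 + h * e2)).
  assert (Hhe1 : Rabs (h * e1) <= Rabs h * S) by (rewrite Rabs_mult; apply Rmult_le_compat_l; [apply Rabs_pos| unfold S; generalize (Rabs_pos e2); lra]).
  assert (Hhe2 : Rabs (h * e2) <= Rabs h * S) by (rewrite Rabs_mult; apply Rmult_le_compat_l; [apply Rabs_pos| unfold S; generalize (Rabs_pos e1); lra]).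
  assert (HhS : Rabs h * S < r0).
  { apply Rmult_lt_reg_r with (/ S). apply Rinv_0_lt_compat; auto.
    replace (Rabs h * S * / S) with (Rabs h) by (field; lra). exact Hh1. }
  assert (Hw : VV w).
  { apply Hloc. unfold w; split; simpl; replace (fst w0 + h * e1 - fst w0) with (h * e1) by ring;
    replace (snd w0 + h * e2 - snd w0) with (h * e2) by ring; lra. }
  destruct (gg_spec w Hw) as [Hgw Egw].
  assert (Hww : Cmod (Cminus w w0) <= Rabs h * (Rabs e1 + Rabs e2)).
  { eapply Rle_trans. apply Cmod_le_sum. rewrite Cminus_fst, Cminus_snd. unfold w; simpl.
    replace (fst w0 + h * e1 - fst w0) with (h * e1) by ring;
    replace (snd w0 + h * e2 - snd w0) with (h * e2) by ring. rewrite !Rabs_mult. lra. }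
  assert (Lk := gg_lip w w0 Hw H0). fold z0 in Lk.
  set (k1 := fst (gg w) - fst z0). set (k2 := snd (gg w) - snd z0).
  assert (Hk : Rabs k1 + Rabs k2 <= 2 * (Rabs h * S / c0)).
  { generalize (Cmod_fst (Cminus (gg w) z0)) (Cmod_snd (Cminus (gg w) z0)). rewrite Cminus_fst, Cminus_snd.
    fold k1 k2. intros M1 M2.
    assert (Cmod (Cminus (gg w) z0) <= Rabs h * S / c0).
    { apply Rmult_le_reg_l with c0; auto. replace (c0 * (Rabs h * S / c0)) with (Rabs h * S) by (field; lra).
      assert (Rabs h * (Rabs e1 + Rabs e2) <= Rabs h * S) by (apply Rmult_le_compat_l; [apply Rabs_pos| unfold S; lra]).
      lra. }
    lra. }
  assert (Hgz : Cmod (Cminus (gg w) z0) < Rmin r1 r2).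
  { apply Rmult_lt_reg_l with c0; auto. eapply Rle_lt_trans. apply Lk. eapply Rle_lt_trans. apply Hww.
    apply Rle_lt_trans with (Rabs h * S). apply Rmult_le_compat_l; [apply Rabs_pos| unfold S; lra].
    apply Rmult_lt_reg_r with (/ S). apply Rinv_0_lt_compat; auto.
    replace (Rabs h * S * / S) with (Rabs h) by (field; lra).
    replace (c0 * Rmin r1 r2 * / S) with (Rmin r1 r2 * c0 / S) by (field; lra). auto. }
  assert (Bz0 : forall r, 0 < r -> bx z0 r z0) by (intros r Hr; split; rewrite Rminus_diag, Rabs_R0; auto).
  assert (B1 : bx z0 r1 (gg w)) by (apply Cmod_bx; eapply Rlt_le_trans; [apply Hgz| apply Rmin_l]).
  assert (B2 : bx z0 r2 (gg w)) by (apply Cmod_bx; eapply Rlt_le_trans; [apply Hgz| apply Rmin_r]).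
  specialize (F1 z0 (gg w) (Bz0 r1 Hr1) B1). specialize (F2 z0 (gg w) (Bz0 r2 Hr2) B2).
  fold k1 k2 in F1, F2.
  assert (U1 : uu (gg w) - uu z0 = h * e1) by (unfold uu; rewrite Egw, Ez0; unfold w; simpl; ring).
  assert (U2 : vv (gg w) - vv z0 = h * e2) by (unfold vv; rewrite Egw, Ez0; unfold w; simpl; ring).
  change (dx uu z0) with (ux z0) in F1. change (dy uu z0) with (uy z0) in F1.
  change (dx vv z0) with (vx z0) in F2. change (dy vv z0) with (vy z0) in F2.
  set (E1 := h * e1 - (ux z0 * k1 + uy z0 * k2)).
  set (E2 := h * e2 - (vx z0 * k1 + vy z0 * k2)).
  set (bnd := 2 * ep * S / c0).
  assert (BE : ep * (Rabs k1 + Rabs k2) <= bnd * Rabs h).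
  { unfold bnd. apply Rle_trans with (ep * (2 * (Rabs h * S / c0))). apply Rmult_le_compat_l; lra.
    right; field; lra. }
  assert (BE1 : Rabs E1 <= bnd * Rabs h).
  { unfold E1. replace (h * e1 - (ux z0 * k1 + uy z0 * k2)) with (uu (gg w) - uu z0 - (ux z0 * k1 + uy z0 * k2)) by (rewrite U1; ring). lra. }
  assert (BE2 : Rabs E2 <= bnd * Rabs h).
  { unfold E2. replace (h * e2 - (vx z0 * k1 + vy z0 * k2)) with (vv (gg w) - vv z0 - (vx z0 * k1 + vy z0 * k2)) by (rewrite U2; ring). lra. }
  destruct (lin_solve (ux z0) (uy z0) (vx z0) (vy z0) k1 k2 h e1 e2 E1 E2 D bnd) as [R1 R2]; auto.
  unfold E1; ring. unfold E2; ring.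
  assert (Hfin : forall x y, Rabs x + Rabs y <= K -> (Rabs x + Rabs y) * bnd / D < eps).
  { intros x y Hxy. apply Rle_lt_trans with (K * bnd / D).
    unfold Rdiv. apply Rmult_le_compat_r. left; apply Rinv_0_lt_compat; auto.
    assert (0 < bnd). unfold bnd. apply Rdiv_lt_0_compat. apply Rmult_lt_0_compat. lra. exact HS. exact HC.
    apply Rmult_le_compat_r; lra.
    unfold bnd, ep. replace (K * (2 * (eps * c0 * D / (4 * K * S)) * S / c0) / D) with (eps / 2) by (field; repeat split; lra).
    lra. }
  split.
  - eapply Rle_lt_trans. apply R1. apply Hfin. unfold K. generalize (Rabs_pos (ux z0)) (Rabs_pos (vx z0)); lra.
  - eapply Rle_lt_trans. apply R2. apply Hfin. unfold K. generalize (Rabs_pos (uy z0)) (Rabs_pos (vy z0)); lra.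
Qed.

Lemma gg_d1 w0 e1 e2 (f : R -> R) x l : VV w0 ->
  (forall h, f (x + h) = fst (gg (fst w0 + h * e1, snd w0 + h * e2))) -> f x = fst (gg w0) ->
  l = (vy (gg w0) * e1 - uy (gg w0) * e2) / det (gg w0) -> is_derive f x l.
Proof.
  intros H0 Hf Hx El. apply is_derive_Reals. intros eps He.
  destruct (gg_deriv w0 e1 e2 H0 eps He) as [del [Hdel H]].
  exists (mkposreal del Hdel). intros h Hh Hhd. rewrite Hf, Hx, El. apply (H h Hh Hhd).
Qed.

Lemma gg_d2 w0 e1 e2 (f : R -> R) x l : VV w0 ->
  (forall h, f (x + h) = snd (gg (fst w0 + h * e1, snd w0 + h * e2))) -> f x = snd (gg w0) ->
  l = (ux (gg w0) * e2 - vx (gg w0) * e1) / det (gg w0) -> is_derive f x l.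
Proof.
  intros H0 Hf Hx El. apply is_derive_Reals. intros eps He.
  destruct (gg_deriv w0 e1 e2 H0 eps He) as [del [Hdel H]].
  exists (mkposreal del Hdel). intros h Hh Hhd. rewrite Hf, Hx, El. apply (H h Hh Hhd).
Qed.

Lemma cont_form (N : C -> R) w0 : VV w0 -> (forall z, continuous N z) ->
  continuous (fun w => N (gg w) / det (gg w)) w0.
Proof.
  intros H0 HN.
  destruct (gg_spec w0 H0) as [Hz0 _].
  assert (HD := UU_det _ Hz0).
  apply (continuous_comp gg (fun z => N z / det z) w0). apply gg_cont; auto.
  set (z0 := gg w0) in *.
  assert (Cdet : continuous det z0).
  { apply (continuous_minus (fun z => ux z * vy z) (fun z => uy z * vx z) z0).
    apply (continuous_mult ux vy z0). apply cont_ux. apply cont_vy.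
    apply (continuous_mult uy vx z0). apply cont_uy. apply cont_vx. }
  apply (continuous_mult N (fun z => / det z) z0). apply HN.
  apply (continuous_comp det Rinv z0). auto. apply continuous_Rinv. lra.
Qed.

Lemma cont_N1 e1 e2 z : continuous (fun z => vy z * e1 - uy z * e2) z.
Proof.
  apply (continuous_minus (fun z => vy z * e1) (fun z => uy z * e2) z).
  apply (continuous_mult vy (fun _ => e1) z). apply cont_vy. apply continuous_const.
  apply (continuous_mult uy (fun _ => e2) z). apply cont_uy. apply continuous_const.
Qed.
Lemma cont_N2 e1 e2 z : continuous (fun z => ux z * e2 - vx z * e1) z.
Proof.
  apply (continuous_minus (fun z => ux z * e2) (fun z => vx z * e1) z).
  apply (continuous_mult ux (fun _ => e2) z). apply cont_ux. apply continuous_const.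
  apply (continuous_mult vx (fun _ => e1) z). apply cont_vx. apply continuous_const.
Qed.

Lemma pt_x w h : (fst w + h * 1, snd w + h * 0) = (fst w + h, snd w).
Proof. f_equal; ring. Qed.
Lemma pt_y w h : (fst w + h * 0, snd w + h * 1) = (fst w, snd w + h).
Proof. f_equal; ring. Qed.

Lemma gg_C1 : C1_on VV gg.
Proof.
  assert (Dx1 : forall w, VV w -> is_derive (fun t => fst (gg (t, snd w))) (fst w)
                  ((vy (gg w) * 1 - uy (gg w) * 0) / det (gg w))).
  { intros w Hw. apply (gg_d1 w 1 0); auto. intros h. rewrite pt_x. auto.
    rewrite <- surjective_pairing. auto. }
  assert (Dy1 : forall w, VV w -> is_derive (fun t => fst (gg (fst w, t))) (snd w)
                  ((vy (gg w) * 0 - uy (gg w) * 1) / det (gg w))).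
  { intros w Hw. apply (gg_d1 w 0 1); auto. intros h. rewrite pt_y. auto.
    rewrite <- surjective_pairing. auto. }
  assert (Dx2 : forall w, VV w -> is_derive (fun t => snd (gg (t, snd w))) (fst w)
                  ((ux (gg w) * 0 - vx (gg w) * 1) / det (gg w))).
  { intros w Hw. apply (gg_d2 w 1 0); auto. intros h. rewrite pt_x. auto.
    rewrite <- surjective_pairing. auto. }
  assert (Dy2 : forall w, VV w -> is_derive (fun t => snd (gg (fst w, t))) (snd w)
                  ((ux (gg w) * 1 - vx (gg w) * 0) / det (gg w))).
  { intros w Hw. apply (gg_d2 w 0 1); auto. intros h. rewrite pt_y. auto.
    rewrite <- surjective_pairing. auto. }
  assert (Loc : forall (P : C -> Prop) w, VV w -> (forall y, VV y -> P y) -> locally w P).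
  { intros P w Hw HP. destruct (VV_loc w Hw) as [r [Hr H]]. exists (mkposreal r Hr).
    intros y Hy. apply HP, H. apply ball_bx; auto. }
  split; intros w Hw; (split; [|split; [|split]]).
  - eexists; apply Dx1; auto.
  - eexists; apply Dy1; auto.
  - apply (continuous_ext_loc _ (fun w => (vy (gg w) * 1 - uy (gg w) * 0) / det (gg w))).
    apply Loc; auto. intros y Hy. unfold dx. symmetry. apply is_derive_unique. apply Dx1; auto.
    apply (cont_form (fun z => vy z * 1 - uy z * 0)); auto. intros z; apply cont_N1.
  - apply (continuous_ext_loc _ (fun w => (vy (gg w) * 0 - uy (gg w) * 1) / det (gg w))).
    apply Loc; auto. intros y Hy. unfold dy. symmetry. apply is_derive_unique. apply Dy1; auto.
    apply (cont_form (fun z => vy z * 0 - uy z * 1)); auto. intros z; apply cont_N1.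
  - eexists; apply Dx2; auto.
  - eexists; apply Dy2; auto.
  - apply (continuous_ext_loc _ (fun w => (ux (gg w) * 0 - vx (gg w) * 1) / det (gg w))).
    apply Loc; auto. intros y Hy. unfold dx. symmetry. apply is_derive_unique. apply Dx2; auto.
    apply (cont_form (fun z => ux z * 0 - vx z * 1)); auto. intros z; apply cont_N2.
  - apply (continuous_ext_loc _ (fun w => (ux (gg w) * 1 - vx (gg w) * 0) / det (gg w))).
    apply Loc; auto. intros y Hy. unfold dy. symmetry. apply is_derive_unique. apply Dy2; auto.
    apply (cont_form (fun z => ux z * 1 - vx z * 0)); auto. intros z; apply cont_N2.
Qed.

Lemma build_concl : exists U : C -> Prop,
    open U /\ (forall z, Gamma z -> U z) /\
    (forall z w, U z -> U w -> eta z = eta w -> z = w) /\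
    open (fun w => exists z, U z /\ eta z = w) /\
    (forall w, onT w -> exists z, U z /\ eta z = w) /\
    (exists g : C -> C,
        (forall z, U z -> g (eta z) = z) /\
        C1_on (fun w => exists z, U z /\ eta z = w) g) /\
    (exists c Cc : R, 0 < c /\ 0 < Cc /\
       forall z w, U z -> U w ->
         c * Cmod (Cminus z w) <= Cmod (Cminus (eta z) (eta w)) /\
         Cmod (Cminus (eta z) (eta w)) <= Cc * Cmod (Cminus z w)).
Proof.
  exists UU. split; [apply UU_open|]. split; [apply UU_Gamma|]. split; [apply inj|].
  split; [apply VV_open|]. split; [apply T_VV|]. split.
  - exists gg. split. apply gg_eta. apply gg_C1.
  - exists c0, C0. split. apply c0_pos. split. apply C0_pos. apply bilip.
Qed.

End Build.

Lemma main_sec : exists U : C -> Prop,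
    open U /\ (forall z, Gamma z -> U z) /\
    (forall z w, U z -> U w -> eta z = eta w -> z = w) /\
    open (fun w => exists z, U z /\ eta z = w) /\
    (forall w, onT w -> exists z, U z /\ eta z = w) /\
    (exists g : C -> C,
        (forall z, U z -> g (eta z) = z) /\
        C1_on (fun w => exists z, U z /\ eta z = w) g) /\
    (exists c Cc : R, 0 < c /\ 0 < Cc /\
       forall z w, U z -> U w ->
         c * Cmod (Cminus z w) <= Cmod (Cminus (eta z) (eta w)) /\
         Cmod (Cminus (eta z) (eta w)) <= Cc * Cmod (Cminus z w)).
Proof.
  destruct unif as [d [Hd Hunif]].
  destruct (sep (d / 4)) as [sg [Hsg Hsep]]. lra.
  destruct bounded as [B [HB Hbd]].
  set (rho := Rmin (d / 8) (sg / 2 / (4 * (3 / (4 * d))))).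
  assert (Hk : 0 < 4 * (3 / (4 * d))) by (apply Rmult_lt_0_compat; [lra| apply Rdiv_lt_0_compat; lra]).
  assert (Hrho : 0 < rho) by (apply Rmin_pos; [lra| apply Rdiv_lt_0_compat; lra]).
  assert (Hrho1 : rho <= d / 8) by apply Rmin_l.
  assert (Hrho2 : 4 * (3 / (4 * d)) * rho <= sg / 2).
  { apply Rle_trans with (4 * (3 / (4 * d)) * (sg / 2 / (4 * (3 / (4 * d))))).
    apply Rmult_le_compat_l. lra. apply Rmin_r. right; field. lra. }
  eapply (build_concl d rho sg B); eauto.
Qed.

End Main.

Lemma dist_zero (Gamma : C -> Prop) z : Gamma z -> dist_set Gamma z = 0.
Proof.
  intros Hz. unfold dist_set.
  set (E := fun r => exists w, Gamma w /\ r = Cmod (Cminus z w)).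
  destruct (Glb_Rbar_correct E) as [H1 H2].
  assert (E0 : E 0) by (exists z; split; auto; rewrite Cmod_self; auto).
  assert (Hle : Rbar_le (Glb_Rbar E) 0) by (apply H1; auto).
  assert (Hge : Rbar_le 0 (Glb_Rbar E)).
  { apply H2. intros x [w [_ Ex]]. rewrite Ex. simpl. apply Cmod_ge_0. }
  destruct (Glb_Rbar E); simpl in *; try contradiction. lra.
Qed.

Theorem lemma2 (alpha : R) (Gamma : C -> Prop) (psi eta : C -> C) :
  0 < alpha < 1 ->
  jordan_C1a alpha Gamma psi ->
  C1a_Gamma alpha psi eta ->
  (forall w, onT w <-> exists z, Gamma z /\ eta z = w) ->
  (exists etainv : C -> C,
      (forall w, onT w -> Gamma (etainv w) /\ eta (etainv w) = w) /\
      (forall z, Gamma z -> etainv (eta z) = z) /\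
      (forall t, differentiable_curve_at (lift etainv) t)) ->
  pseudoanalytic_ext alpha Gamma eta eta ->
  exists U : C -> Prop,
    open U /\ (forall z, Gamma z -> U z) /\
    (forall z w, U z -> U w -> eta z = eta w -> z = w) /\
    open (fun w => exists z, U z /\ eta z = w) /\
    (forall w, onT w -> exists z, U z /\ eta z = w) /\
    (exists g : C -> C,
        (forall z, U z -> g (eta z) = z) /\
        C1_on (fun w => exists z, U z /\ eta z = w) g) /\
    (exists c Cc : R, 0 < c /\ 0 < Cc /\
       forall z w, U z -> U w ->
         c * Cmod (Cminus z w) <= Cmod (Cminus (eta z) (eta w)) /\
         Cmod (Cminus (eta z) (eta w)) <= Cc * Cmod (Cminus z w)).
Proof.
  intros Ha _ _ HT [etainv [Hi1 [Hi2 Hi3]]] [HC1 [_ [Cf HCf]]].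
  apply (main_sec Gamma eta etainv); auto.
  intros z Hz. specialize (HCf z). rewrite (dist_zero Gamma z Hz) in HCf.
  unfold hpow in HCf. destruct (Rle_dec 0 0) as [_|n]; [|exfalso; apply n; lra].
  rewrite Rmult_0_r in HCf. assert (H0 : Cmod (dbar eta z) = 0) by (generalize (Cmod_ge_0 (dbar eta z)); lra).
  apply Cmod_eq_0 in H0. rewrite H0. auto.
Qed.
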